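(* For any based spaces $(X,x_0)$ and $(Y,y_0)$, the homomorphism $\phi:\pi_1^{\tau}(X\times Y,(x_0,y_0))\to\pi_1^{\tau}(X,x_0)\times\pi_1^{\tau}(Y,y_0)$ induced by the two projections, $\phi([(\alpha,\beta)])=([\alpha],[\beta])$, is a natural isomorphism of topological groups (the target carrying the product topology).
   Context: $\Omega(Z,z)$ is the loop space with the compact-open topology; $\pi_1^{qtop}(Z,z)$ is $\pi_1(Z,z)$ with the quotient topology via $\alpha\mapsto[\alpha]$. $F_M(S)$ is the free (Markov) topological group on a space $S$. For a group with topology $G$, $\tau(G)$ is $G$ with the quotient topology with respect to the multiplication epimorphism $m_G:F_M(G)\to G$ (generator $g\mapsto g$). $\pi_1^{\tau}=\tau\circ\pi_1^{qtop}$. *)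

(* Defs.v *)
From Stdlib Require Import Reals Lra List Relations ClassicalEpsilon.
Open Scope R_scope.

Definition is_topology {X : Type} (O : (X -> Prop) -> Prop) : Prop :=
  O (fun _ => True) /\ O (fun _ => False) /\
  (forall U V, O U -> O V -> O (fun x => U x /\ V x)) /\
  (forall F : (X -> Prop) -> Prop, (forall U, F U -> O U) ->
     O (fun x => exists U, F U /\ U x)).

Definition continuous {X Y : Type} (OX : (X -> Prop) -> Prop)
  (OY : (Y -> Prop) -> Prop) (f : X -> Y) : Prop :=
  forall V, OY V -> OX (fun x => V (f x)).

Definition prod_open {X Y : Type} (OX : (X -> Prop) -> Prop)
  (OY : (Y -> Prop) -> Prop) (W : X * Y -> Prop) : Prop :=
  forall p, W p -> exists A B, OX A /\ OY B /\ A (fst p) /\ B (snd p) /\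
    (forall q, A (fst q) -> B (snd q) -> W q).

Definition generated {X : Type} (B : (X -> Prop) -> Prop) (U : X -> Prop) : Prop :=
  forall x, U x -> exists l : list (X -> Prop),
    (forall V, In V l -> B V) /\ (forall V, In V l -> V x) /\
    (forall y, (forall V, In V l -> V y) -> U y).

Definition compact {X : Type} (O : (X -> Prop) -> Prop) (K : X -> Prop) : Prop :=
  forall F : (X -> Prop) -> Prop, (forall U, F U -> O U) ->
    (forall x, K x -> exists U, F U /\ U x) ->
    exists l, (forall U, In U l -> F U) /\ (forall x, K x -> exists U, In U l /\ U x).

Definition R_open (U : R -> Prop) : Prop :=
  forall x, U x -> exists eps, 0 < eps /\ forall y, Rabs (y - x) < eps -> U y.

Definition I := {t : R | 0 <= t <= 1}.
Definition I_open (U : I -> Prop) : Prop :=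
  exists V, R_open V /\ forall t : I, U t <-> V (proj1_sig t).

Lemma I0_pf : 0 <= 0 <= 1. Proof. lra. Qed.
Lemma I1_pf : 0 <= 1 <= 1. Proof. lra. Qed.
Definition I0 : I := exist _ 0 I0_pf.
Definition I1 : I := exist _ 1 I1_pf.

Lemma clamp_pf (r : R) : 0 <= Rmax 0 (Rmin 1 r) <= 1.
Proof.
  split; [apply Rmax_l|]. apply Rmax_lub; [lra|apply Rmin_l].
Qed.
Definition clampI (r : R) : I := exist _ _ (clamp_pf r).

Lemma rev_pf (t : I) : 0 <= 1 - proj1_sig t <= 1.
Proof. destruct t as [t Ht]; simpl; lra. Qed.
Definition revI (t : I) : I := exist _ _ (rev_pf t).

Definition concat_fun {X : Type} (a b : I -> X) (t : I) : X :=
  if Rle_dec (proj1_sig t) (1/2) then a (clampI (2 * proj1_sig t))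
  else b (clampI (2 * proj1_sig t - 1)).

Definition is_loop {X : Type} (OX : (X -> Prop) -> Prop) (x0 : X) (a : I -> X) : Prop :=
  continuous I_open OX a /\ a I0 = x0 /\ a I1 = x0.

Definition Omega {X : Type} (OX : (X -> Prop) -> Prop) (x0 : X) :=
  {a : I -> X | is_loop OX x0 a}.

Definition Omega_open {X : Type} (OX : (X -> Prop) -> Prop) (x0 : X)
  : (Omega OX x0 -> Prop) -> Prop :=
  generated (fun W => exists K U, compact I_open K /\ OX U /\
     forall a : Omega OX x0, W a <-> (forall t, K t -> U (proj1_sig a t))).

Definition homotopic {X : Type} (OX : (X -> Prop) -> Prop) (x0 : X) (a b : I -> X) : Prop :=
  exists H : I * I -> X, continuous (prod_open I_open I_open) OX H /\
    (forall s, H (s, I0) = a s) /\ (forall s, H (s, I1) = b s) /\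
    (forall t, H (I0, t) = x0 /\ H (I1, t) = x0).

Definition pi1 {X : Type} (OX : (X -> Prop) -> Prop) (x0 : X) :=
  {C : Omega OX x0 -> Prop | exists a : Omega OX x0,
     forall b, C b <-> homotopic OX x0 (proj1_sig a) (proj1_sig b)}.

Definition cls {X : Type} {OX : (X -> Prop) -> Prop} {x0 : X} (a : Omega OX x0)
  : pi1 OX x0 :=
  exist _ (fun b => homotopic OX x0 (proj1_sig a) (proj1_sig b))
        (ex_intro _ a (fun b => iff_refl _)).

Definition pi1_qtop_open {X : Type} (OX : (X -> Prop) -> Prop) (x0 : X)
  (V : pi1 OX x0 -> Prop) : Prop :=
  Omega_open OX x0 (fun a => V (cls a)).

Lemma const_loop_pf {X : Type} (OX : (X -> Prop) -> Prop) (x0 : X) :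
  is_loop OX x0 (fun _ => x0).
Proof.
  split; [|split; reflexivity].
  intros V _. exists (fun _ => V x0). split.
  - intros x Hx. exists 1. split; [lra|]. intros; exact Hx.
  - intros t; simpl; tauto.
Qed.
Definition const_loop {X : Type} (OX : (X -> Prop) -> Prop) (x0 : X) : Omega OX x0 :=
  exist _ _ (const_loop_pf OX x0).

(* group operations: the class of the constant loop, of the concatenation,
   and of the reversed loop (chosen by Hilbert's epsilon, which picks the
   unique class satisfying the defining property) *)
Definition pi1_one {X : Type} (OX : (X -> Prop) -> Prop) (x0 : X) : pi1 OX x0 :=
  cls (const_loop OX x0).

Definition pi1_mul {X : Type} (OX : (X -> Prop) -> Prop) (x0 : X)
  (C D : pi1 OX x0) : pi1 OX x0 :=
  epsilon (inhabits (pi1_one OX x0)) (fun E => exists a b c,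
    proj1_sig C a /\ proj1_sig D b /\ proj1_sig E c /\
    forall t, proj1_sig c t = concat_fun (proj1_sig a) (proj1_sig b) t).

Definition pi1_inv {X : Type} (OX : (X -> Prop) -> Prop) (x0 : X)
  (C : pi1 OX x0) : pi1 OX x0 :=
  epsilon (inhabits (pi1_one OX x0)) (fun E => exists a c,
    proj1_sig C a /\ proj1_sig E c /\
    forall t, proj1_sig c t = proj1_sig a (revI t)).

Definition pi1_map {X X' : Type} (OX : (X -> Prop) -> Prop) (x0 : X)
  (OX' : (X' -> Prop) -> Prop) (x0' : X') (f : X -> X') (C : pi1 OX x0) : pi1 OX' x0' :=
  epsilon (inhabits (pi1_one OX' x0')) (fun E => exists a b,
    proj1_sig C a /\ proj1_sig E b /\ forall t, proj1_sig b t = f (proj1_sig a t)).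

Definition word (S : Type) := list (bool * S).   (* (true,s) = s, (false,s) = s^-1 *)

Definition fstep (S : Type) : relation (word S) := fun u v =>
  exists w1 w2 b s, u = w1 ++ (b, s) :: (negb b, s) :: w2 /\ v = w1 ++ w2.

Definition fequiv (S : Type) : relation (word S) := clos_refl_sym_trans _ (fstep S).

Definition FG (S : Type) :=
  {C : word S -> Prop | exists w : word S, forall v, C v <-> fequiv S w v}.

Definition fcls {S : Type} (w : word S) : FG S :=
  exist _ (fun v => fequiv S w v) (ex_intro _ w (fun v => iff_refl _)).

Definition frep {S : Type} (C : FG S) : word S :=
  proj1_sig (constructive_indefinite_description _ (proj2_sig C)).

Definition word_inv {S : Type} (w : word S) : word S :=
  rev (map (fun p => (negb (fst p), snd p)) w).

Definition fmul {S : Type} (C D : FG S) : FG S := fcls (frep C ++ frep D).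
Definition finv {S : Type} (C : FG S) : FG S := fcls (word_inv (frep C)).
Definition fgen {S : Type} (s : S) : FG S := fcls ((true, s) :: nil).

Definition is_group_topology {S : Type} (T : (FG S -> Prop) -> Prop) : Prop :=
  is_topology T /\
  continuous (prod_open T T) T (fun p => fmul (fst p) (snd p)) /\
  continuous T T (@finv S).

(* F_M(S): the finest group topology on F(S) making the generator map
   continuous = topology generated by all such group topologies *)
Definition FM_open {S : Type} (OS : (S -> Prop) -> Prop) : (FG S -> Prop) -> Prop :=
  generated (fun V => exists T, is_group_topology T /\ continuous OS T (@fgen S) /\ T V).

Definition word_eval {G : Type} (mul : G -> G -> G) (inv : G -> G) (one : G)
  (w : word G) : G :=
  fold_right (fun (p : bool * G) (acc : G) => mul (if fst p then snd p else inv (snd p)) acc) one w.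

Definition mG {G : Type} (mul : G -> G -> G) (inv : G -> G) (one : G) (C : FG G) : G :=
  word_eval mul inv one (frep C).

Definition tau_open {G : Type} (OG : (G -> Prop) -> Prop) (mul : G -> G -> G)
  (inv : G -> G) (one : G) (V : G -> Prop) : Prop :=
  FM_open OG (fun C => V (mG mul inv one C)).

Definition pi1_tau_open {X : Type} (OX : (X -> Prop) -> Prop) (x0 : X)
  : (pi1 OX x0 -> Prop) -> Prop :=
  tau_open (pi1_qtop_open OX x0) (pi1_mul OX x0) (pi1_inv OX x0) (pi1_one OX x0).

Definition phi {X Y : Type} (OX : (X -> Prop) -> Prop) (x0 : X)
  (OY : (Y -> Prop) -> Prop) (y0 : Y)
  (C : pi1 (prod_open OX OY) (x0, y0)) : pi1 OX x0 * pi1 OY y0 :=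
  (pi1_map (prod_open OX OY) (x0, y0) OX x0 (@fst X Y) C,
   pi1_map (prod_open OX OY) (x0, y0) OY y0 (@snd X Y) C).

(* Main.v *)
Require Import Defs.
From Stdlib Require Import Reals Lra List Relations ClassicalEpsilon
  FunctionalExtensionality PropExtensionality ProofIrrelevance.
Open Scope R_scope.

Lemma pext {A : Type} (P Q : A -> Prop) : (forall x, P x <-> Q x) -> P = Q.
Proof.
  intros H. apply functional_extensionality; intros x.
  apply propositional_extensionality; apply H.
Qed.

Lemma Ieq (s t : I) : proj1_sig s = proj1_sig t -> s = t.
Proof.
  destruct s as [s Hs], t as [t Ht]; simpl; intros ->.
  f_equal; apply proof_irrelevance.
Qed.

Lemma clamp_val (r : R) : 0 <= r <= 1 -> proj1_sig (clampI r) = r.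
Proof.
  intros H; simpl. unfold Rmin, Rmax.
  destruct (Rle_dec 1 r); destruct (Rle_dec 0 _); lra.
Qed.

Lemma clamp_bounds (r : R) : 0 <= proj1_sig (clampI r) <= 1.
Proof. apply clamp_pf. Qed.

Lemma clamp_cases (r : R) : let v := proj1_sig (clampI r) in
  (r <= 0 /\ v = 0) \/ (0 <= r <= 1 /\ v = r) \/ (1 <= r /\ v = 1).
Proof.
  simpl. unfold Rmin, Rmax.
  destruct (Rle_dec 1 r); destruct (Rle_dec 0 _); lra.
Qed.

Lemma clamp_lip (r q : R) :
  Rabs (proj1_sig (clampI r) - proj1_sig (clampI q)) <= Rabs (r - q).
Proof.
  destruct (clamp_cases r) as [[A B]|[[A B]|[A B]]]; rewrite B;
  destruct (clamp_cases q) as [[C D]|[[C D]|[C D]]]; rewrite D;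
  unfold Rabs; repeat (match goal with |- context [Rcase_abs ?a] => destruct (Rcase_abs a) end);
  lra.
Qed.

Lemma clampI_eq (r q : R) : r = q -> clampI r = clampI q.
Proof. intros ->; reflexivity. Qed.

Lemma clamp_I (t : I) : clampI (proj1_sig t) = t.
Proof. apply Ieq. apply clamp_val. apply (proj2_sig t). Qed.

Lemma clamp0 : clampI 0 = I0.
Proof. apply Ieq. rewrite clamp_val; simpl; lra. Qed.
Lemma clamp1 : clampI 1 = I1.
Proof. apply Ieq. rewrite clamp_val; simpl; lra. Qed.

Lemma clamp_le0 (r : R) : r <= 0 -> clampI r = I0.
Proof. intros H. apply Ieq. simpl. unfold Rmin, Rmax.
  destruct (Rle_dec 1 r); destruct (Rle_dec 0 _); lra. Qed.
Lemma clamp_ge1 (r : R) : 1 <= r -> clampI r = I1.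
Proof. intros H. apply Ieq. simpl. unfold Rmin, Rmax.
  destruct (Rle_dec 1 r); destruct (Rle_dec 0 _); lra. Qed.

Definition mopen {Z : Type} (d : Z -> Z -> R) (W : Z -> Prop) : Prop :=
  forall p, W p -> exists e, 0 < e /\ forall q, d p q < e -> W q.

Definition dI (s t : I) : R := Rabs (proj1_sig s - proj1_sig t).
Definition dII (p q : I * I) : R := Rmax (dI (fst p) (fst q)) (dI (snd p) (snd q)).
Definition dR (x y : R) : R := Rabs (x - y).

Lemma I_open_iff (W : I -> Prop) : I_open W <-> mopen dI W.
Proof.
  split.
  - intros [V [HV HW]] p Hp. apply HW in Hp. destruct (HV _ Hp) as [e [He He']].
    exists e; split; auto. intros q Hq. apply HW. apply He'. unfold dI in Hq.
    rewrite Rabs_minus_sym; auto.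
  - intros HW.
    exists (fun r => exists t e, W t /\ 0 < e /\ (forall q, dI t q < e -> W q) /\
                     Rabs (r - proj1_sig t) < e).
    split.
    + intros r [t [e [Wt [He [Hq Hr]]]]].
      exists (e - Rabs (r - proj1_sig t)); split; [lra|].
      intros y Hy. exists t, e. repeat split; auto.
      pose proof (Rabs_triang (y - r) (r - proj1_sig t)).
      replace (y - r + (r - proj1_sig t)) with (y - proj1_sig t) in H by ring. lra.
    + intros t; split.
      * intros Wt. destruct (HW t Wt) as [e [He Hq]]. exists t, e. repeat split; auto.
        replace (proj1_sig t - proj1_sig t) with 0 by ring. rewrite Rabs_R0; lra.
      * intros [t' [e [Wt [He [Hq Hr]]]]]. apply Hq. unfold dI.
        rewrite Rabs_minus_sym; auto.
Qed.

Lemma Rmax_lt_iff a b c : Rmax a b < c <-> a < c /\ b < c.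
Proof. unfold Rmax; destruct (Rle_dec a b); split; intros; lra. Qed.

Lemma dI_ball_open (t : I) (e : R) : mopen dI (fun s => dI t s < e).
Proof.
  intros p Hp. exists (e - dI t p). split; [lra|]. intros q Hq.
  unfold dI in *. pose proof (Rabs_triang (proj1_sig t - proj1_sig p) (proj1_sig p - proj1_sig q)).
  replace (proj1_sig t - proj1_sig p + (proj1_sig p - proj1_sig q)) with
    (proj1_sig t - proj1_sig q) in H by ring. lra.
Qed.

Lemma II_open_iff (W : I * I -> Prop) : prod_open I_open I_open W <-> mopen dII W.
Proof.
  split.
  - intros HW p Hp. destruct (HW p Hp) as [A [B [HA [HB [Ap [Bp Hq]]]]]].
    apply I_open_iff in HA. apply I_open_iff in HB.
    destruct (HA _ Ap) as [e1 [He1 H1]]. destruct (HB _ Bp) as [e2 [He2 H2]].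
    exists (Rmin e1 e2). split; [apply Rmin_glb_lt; auto|].
    intros q Hqq. unfold dII in Hqq. apply Rmax_lt_iff in Hqq. destruct Hqq as [Hq1 Hq2].
    apply Hq; [apply H1 | apply H2]; eapply Rlt_le_trans; eauto; [apply Rmin_l|apply Rmin_r].
  - intros HW p Hp. destruct (HW p Hp) as [e [He Hq0]].
    exists (fun s => dI (fst p) s < e), (fun s => dI (snd p) s < e).
    split; [apply I_open_iff, dI_ball_open|].
    split; [apply I_open_iff, dI_ball_open|].
    split; [unfold dI; replace (_ - _) with 0 by ring; rewrite Rabs_R0; lra|].
    split; [unfold dI; replace (_ - _) with 0 by ring; rewrite Rabs_R0; lra|].
    intros q H1 H2. apply Hq0. unfold dII. apply Rmax_lt_iff; auto.
Qed.

Lemma cont_I_iff {X : Type} (OX : (X -> Prop) -> Prop) (f : I -> X) :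
  continuous I_open OX f <-> continuous (mopen dI) OX f.
Proof. unfold continuous; split; intros H V HV; apply I_open_iff; auto; apply H; auto. Qed.

Lemma cont_II_iff {X : Type} (OX : (X -> Prop) -> Prop) (f : I * I -> X) :
  continuous (prod_open I_open I_open) OX f <-> continuous (mopen dII) OX f.
Proof. unfold continuous; split; intros H V HV; apply II_open_iff; auto; apply H; auto. Qed.

Definition mcont {Z1 Z2 : Type} (d1 : Z1 -> Z1 -> R) (d2 : Z2 -> Z2 -> R) (m : Z1 -> Z2) :=
  forall p e, 0 < e -> exists del, 0 < del /\ forall q, d1 p q < del -> d2 (m p) (m q) < e.

Lemma comp_cont {Z1 Z2 X : Type} (d1 : Z1 -> Z1 -> R) (d2 : Z2 -> Z2 -> R)
  (OX : (X -> Prop) -> Prop) (f : Z2 -> X) (m : Z1 -> Z2) :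
  continuous (mopen d2) OX f -> mcont d1 d2 m -> continuous (mopen d1) OX (fun z => f (m z)).
Proof.
  intros Hf Hm V HV p Hp. destruct (Hf V HV (m p) Hp) as [e [He He']].
  destruct (Hm p e He) as [del [Hd Hd']]. exists del; split; auto.
Qed.

Definition rcont {Z : Type} (d : Z -> Z -> R) (f : Z -> R) := mcont d dR f.

Lemma rcont_clamp {Z : Type} (d : Z -> Z -> R) (f : Z -> R) :
  rcont d f -> mcont d dI (fun z => clampI (f z)).
Proof.
  intros H p e He. destruct (H p e He) as [del [Hd Hd']]. exists del; split; auto.
  intros q Hq. unfold dI. eapply Rle_lt_trans; [apply clamp_lip|]. apply Hd'; auto.
Qed.

Lemma mcont_pair2 {Z : Type} (d : Z -> Z -> R) (f g : Z -> I) :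
  mcont d dI f -> mcont d dI g -> mcont d dII (fun z => (f z, g z)).
Proof.
  intros Hf Hg p e He. destruct (Hf p e He) as [d1 [Hd1 H1]]. destruct (Hg p e He) as [d2 [Hd2 H2]].
  exists (Rmin d1 d2); split; [apply Rmin_glb_lt; auto|]. intros q Hq.
  unfold dII; simpl. apply Rmax_lt_iff; split; [apply H1|apply H2];
  eapply Rlt_le_trans; eauto; [apply Rmin_l|apply Rmin_r].
Qed.

Lemma rcont_const {Z : Type} (d : Z -> Z -> R) c : rcont d (fun _ => c).
Proof. intros p e He. exists 1; split; [lra|]. intros q _. unfold dR.
  replace (c - c) with 0 by ring. rewrite Rabs_R0; lra. Qed.

Lemma rcont_plus {Z : Type} (d : Z -> Z -> R) f g :
  rcont d f -> rcont d g -> rcont d (fun z => f z + g z).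
Proof.
  intros Hf Hg p e He. destruct (Hf p (e/2)) as [d1 [Hd1 H1]]; [lra|].
  destruct (Hg p (e/2)) as [d2 [Hd2 H2]]; [lra|].
  exists (Rmin d1 d2); split; [apply Rmin_glb_lt; auto|]. intros q Hq.
  assert (A1 := H1 q (Rlt_le_trans _ _ _ Hq (Rmin_l _ _))).
  assert (A2 := H2 q (Rlt_le_trans _ _ _ Hq (Rmin_r _ _))).
  unfold dR in *. pose proof (Rabs_triang (f p - f q) (g p - g q)).
  replace (f p + g p - (f q + g q)) with (f p - f q + (g p - g q)) by ring. lra.
Qed.

Lemma rcont_scal {Z : Type} (d : Z -> Z -> R) c f :
  rcont d f -> rcont d (fun z => c * f z).
Proof.
  intros Hf p e He. destruct (Hf p (e / (Rabs c + 1))) as [d1 [Hd1 H1]].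
  { apply Rdiv_lt_0_compat; auto. pose proof (Rabs_pos c); lra. }
  exists d1; split; auto. intros q Hq. specialize (H1 q Hq). unfold dR in *.
  replace (c * f p - c * f q) with (c * (f p - f q)) by ring. rewrite Rabs_mult.
  pose proof (Rabs_pos c). pose proof (Rabs_pos (f p - f q)).
  assert (Rabs (f p - f q) * (Rabs c + 1) < e).
  { apply (Rmult_lt_compat_r (Rabs c + 1)) in H1; [|lra].
    unfold Rdiv in H1. rewrite Rmult_assoc, Rinv_l in H1; lra. }
  nra.
Qed.

Lemma rcont_mul {Z : Type} (d : Z -> Z -> R) f g :
  rcont d f -> rcont d g -> rcont d (fun z => f z * g z).
Proof.
  intros Hf Hg p e He.
  set (M := Rabs (f p) + Rabs (g p) + 1).
  assert (HM : 0 < M) by (unfold M; pose proof (Rabs_pos (f p)); pose proof (Rabs_pos (g p)); lra).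
  set (e' := Rmin 1 (e / (2 * M))).
  assert (He' : 0 < e') by (apply Rmin_glb_lt; [lra|apply Rdiv_lt_0_compat; lra]).
  destruct (Hf p e' He') as [d1 [Hd1 H1]]. destruct (Hg p e' He') as [d2 [Hd2 H2]].
  exists (Rmin d1 d2); split; [apply Rmin_glb_lt; auto|]. intros q Hq.
  assert (A1 := H1 q (Rlt_le_trans _ _ _ Hq (Rmin_l _ _))).
  assert (A2 := H2 q (Rlt_le_trans _ _ _ Hq (Rmin_r _ _))).
  unfold dR in *.
  replace (f p * g p - f q * g q) with (f p * (g p - g q) + g q * (f p - f q)) by ring.
  eapply Rle_lt_trans; [apply Rabs_triang|]. rewrite !Rabs_mult.
  assert (Hgq : Rabs (g q) <= Rabs (g p) + 1).
  { pose proof (Rabs_triang (g q - g p) (g p)). replace (g q - g p + g p) with (g q) in H by ring.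
    rewrite Rabs_minus_sym in A2. assert (e' <= 1) by apply Rmin_l. lra. }
  assert (He2 : e' * (2 * M) <= e).
  { assert (e' <= e / (2 * M)) by apply Rmin_r.
    apply (Rmult_le_compat_r (2 * M)) in H; [|lra]. unfold Rdiv in H.
    rewrite Rmult_assoc, Rinv_l in H; lra. }
  pose proof (Rabs_pos (f p)). pose proof (Rabs_pos (g q)).
  pose proof (Rabs_pos (g p - g q)). pose proof (Rabs_pos (f p - f q)).
  assert (Rabs (f p) * Rabs (g p - g q) <= Rabs (f p) * e') by (apply Rmult_le_compat_l; lra).
  assert (Rabs (g q) * Rabs (f p - f q) <= (Rabs (g p) + 1) * e').
  { apply Rmult_le_compat; lra. }
  unfold M in *. nra.
Qed.

Lemma Rmin_lip a b c d0 : Rabs (Rmin a b - Rmin c d0) <= Rmax (Rabs (a - c)) (Rabs (b - d0)).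
Proof.
  unfold Rmin, Rmax. repeat (match goal with |- context [Rle_dec ?a ?b] => destruct (Rle_dec a b) end);
  unfold Rabs in *; repeat (match goal with |- context [Rcase_abs ?a] => destruct (Rcase_abs a)
   | H : context [Rcase_abs ?a] |- _ => destruct (Rcase_abs a) end); lra.
Qed.
Lemma Rmax_lip a b c d0 : Rabs (Rmax a b - Rmax c d0) <= Rmax (Rabs (a - c)) (Rabs (b - d0)).
Proof.
  unfold Rmax. repeat (match goal with |- context [Rle_dec ?a ?b] => destruct (Rle_dec a b) end);
  unfold Rabs in *; repeat (match goal with |- context [Rcase_abs ?a] => destruct (Rcase_abs a)
   | H : context [Rcase_abs ?a] |- _ => destruct (Rcase_abs a) end); lra.
Qed.

Lemma rcont_min {Z : Type} (d : Z -> Z -> R) f g :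
  rcont d f -> rcont d g -> rcont d (fun z => Rmin (f z) (g z)).
Proof.
  intros Hf Hg p e He. destruct (Hf p e He) as [d1 [Hd1 H1]]. destruct (Hg p e He) as [d2 [Hd2 H2]].
  exists (Rmin d1 d2); split; [apply Rmin_glb_lt; auto|]. intros q Hq.
  assert (A1 := H1 q (Rlt_le_trans _ _ _ Hq (Rmin_l _ _))).
  assert (A2 := H2 q (Rlt_le_trans _ _ _ Hq (Rmin_r _ _))).
  unfold dR in *. eapply Rle_lt_trans; [apply Rmin_lip|]. apply Rmax_lt_iff; auto.
Qed.
Lemma rcont_max {Z : Type} (d : Z -> Z -> R) f g :
  rcont d f -> rcont d g -> rcont d (fun z => Rmax (f z) (g z)).
Proof.
  intros Hf Hg p e He. destruct (Hf p e He) as [d1 [Hd1 H1]]. destruct (Hg p e He) as [d2 [Hd2 H2]].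
  exists (Rmin d1 d2); split; [apply Rmin_glb_lt; auto|]. intros q Hq.
  assert (A1 := H1 q (Rlt_le_trans _ _ _ Hq (Rmin_l _ _))).
  assert (A2 := H2 q (Rlt_le_trans _ _ _ Hq (Rmin_r _ _))).
  unfold dR in *. eapply Rle_lt_trans; [apply Rmax_lip|]. apply Rmax_lt_iff; auto.
Qed.

Lemma rcont_id : rcont dR (fun x => x).
Proof. intros p e He. exists e; split; auto. Qed.
Lemma rcont_I : rcont dI (fun s => proj1_sig s).
Proof. intros p e He. exists e; split; auto. Qed.
Lemma rcont_fst : rcont dII (fun p => proj1_sig (fst p)).
Proof. intros p e He. exists e; split; auto. intros q Hq. unfold dII in Hq.
  apply Rmax_lt_iff in Hq. apply Hq. Qed.
Lemma rcont_snd : rcont dII (fun p => proj1_sig (snd p)).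
Proof. intros p e He. exists e; split; auto. intros q Hq. unfold dII in Hq.
  apply Rmax_lt_iff in Hq. apply Hq. Qed.

Lemma paste {Z X : Type} (d : Z -> Z -> R) (OX : (X -> Prop) -> Prop) (c : Z -> R)
  (f g h : Z -> X) :
  rcont d c -> continuous (mopen d) OX g -> continuous (mopen d) OX h ->
  (forall q, c q <= 0 -> f q = g q) -> (forall q, 0 <= c q -> f q = h q) ->
  continuous (mopen d) OX f.
Proof.
  intros Hc Hg Hh Efg Efh V HV p Hp.
  destruct (Rlt_le_dec (c p) 0) as [Hlt|Hge].
  - rewrite Efg in Hp by lra. destruct (Hg V HV p Hp) as [e [He H1]].
    destruct (Hc p (- c p)) as [del [Hd H2]]; [lra|].
    exists (Rmin e del); split; [apply Rmin_glb_lt; auto|]. intros q Hq.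
    assert (A1 := H1 q (Rlt_le_trans _ _ _ Hq (Rmin_l _ _))).
    assert (A2 := H2 q (Rlt_le_trans _ _ _ Hq (Rmin_r _ _))).
    unfold dR in A2. rewrite Efg; auto.
    unfold Rabs in A2; destruct (Rcase_abs _) in A2; lra.
  - destruct (Rle_lt_dec (c p) 0) as [Hle|Hgt].
    + assert (Hp' : V (h p)) by (rewrite <- Efh; auto; lra).
      rewrite Efg in Hp by lra.
      destruct (Hg V HV p Hp) as [e [He H1]]. destruct (Hh V HV p Hp') as [e2 [He2 H2]].
      exists (Rmin e e2); split; [apply Rmin_glb_lt; auto|]. intros q Hq.
      assert (A1 := H1 q (Rlt_le_trans _ _ _ Hq (Rmin_l _ _))).
      assert (A2 := H2 q (Rlt_le_trans _ _ _ Hq (Rmin_r _ _))).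
      destruct (Rle_dec (c q) 0); [rewrite Efg|rewrite Efh]; auto; lra.
    + rewrite Efh in Hp by lra. destruct (Hh V HV p Hp) as [e [He H1]].
      destruct (Hc p (c p)) as [del [Hd H2]]; [lra|].
      exists (Rmin e del); split; [apply Rmin_glb_lt; auto|]. intros q Hq.
      assert (A1 := H1 q (Rlt_le_trans _ _ _ Hq (Rmin_l _ _))).
      assert (A2 := H2 q (Rlt_le_trans _ _ _ Hq (Rmin_r _ _))).
      unfold dR in A2. rewrite Efh; auto.
      unfold Rabs in A2; destruct (Rcase_abs _) in A2; lra.
Qed.

Lemma cont_compose {A B C : Type} (OA : (A -> Prop) -> Prop) (OB : (B -> Prop) -> Prop)
  (OC : (C -> Prop) -> Prop) (f : A -> B) (g : B -> C) :
  continuous OA OB f -> continuous OB OC g -> continuous OA OC (fun x => g (f x)).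
Proof. intros Hf Hg V HV. apply (Hf _ (Hg V HV)). Qed.

Lemma mcont_fst : mcont dII dI (@fst I I).
Proof. intros p e He. exists e; split; auto. intros q Hq. unfold dII in Hq.
  apply Rmax_lt_iff in Hq. apply Hq. Qed.
Lemma mcont_snd : mcont dII dI (@snd I I).
Proof. intros p e He. exists e; split; auto. intros q Hq. unfold dII in Hq.
  apply Rmax_lt_iff in Hq. apply Hq. Qed.
Lemma mcont_revI : mcont dI dI revI.
Proof. intros p e He. exists e; split; auto. intros q Hq. unfold dI in *; simpl.
  replace (1 - proj1_sig p - (1 - proj1_sig q)) with (- (proj1_sig p - proj1_sig q)) by ring.
  rewrite Rabs_Ropp; auto. Qed.
Lemma mcont_comp {Z1 Z2 Z3 : Type} (d1 : Z1 -> Z1 -> R) (d2 : Z2 -> Z2 -> R) (d3 : Z3 -> Z3 -> R)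
  (f : Z1 -> Z2) (g : Z2 -> Z3) : mcont d1 d2 f -> mcont d2 d3 g -> mcont d1 d3 (fun z => g (f z)).
Proof.
  intros Hf Hg p e He. destruct (Hg (f p) e He) as [d' [Hd' H']].
  destruct (Hf p d' Hd') as [d'' [Hd'' H'']]. exists d''; split; auto.
Qed.

Lemma cont_clamp_comp {Z X : Type} (d : Z -> Z -> R) (OX : (X -> Prop) -> Prop)
  (a : I -> X) (psi : Z -> R) :
  continuous I_open OX a -> rcont d psi -> continuous (mopen d) OX (fun z => a (clampI (psi z))).
Proof.
  intros Ha Hp. apply cont_I_iff in Ha. apply (comp_cont d dI OX a (fun z => clampI (psi z))); auto.
  apply rcont_clamp; auto.
Qed.

Definition P2 {X : Type} (a b : I -> X) (r : R) : X :=
  if Rle_dec r 1 then a (clampI r) else b (clampI (r - 1)).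
Definition P3 {X : Type} (a b c : I -> X) (r : R) : X :=
  if Rle_dec r 1 then a (clampI r) else P2 b c (r - 1).

Lemma rcont_sub1 : rcont dR (fun r => r + -1).
Proof. apply rcont_plus; [apply rcont_id|apply rcont_const]. Qed.

Lemma P2_cont {X : Type} (OX : (X -> Prop) -> Prop) (a b : I -> X) :
  continuous I_open OX a -> continuous I_open OX b -> a I1 = b I0 ->
  continuous (mopen dR) OX (P2 a b).
Proof.
  intros Ha Hb E.
  apply (paste dR OX (fun r => r + -1) (P2 a b) (fun r => a (clampI r))
           (fun r => b (clampI (r + -1)))).
  - apply rcont_sub1.
  - apply (cont_clamp_comp dR OX a (fun r => r)); auto. apply rcont_id.
  - apply (cont_clamp_comp dR OX b (fun r => r + -1)); auto. apply rcont_sub1.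
  - intros q Hq. unfold P2. destruct (Rle_dec q 1); [reflexivity|lra].
  - intros q Hq. unfold P2. destruct (Rle_dec q 1).
    + assert (q = 1) by lra. subst. rewrite clamp1, E.
      replace (1 + -1) with 0 by ring. rewrite clamp0; auto.
    + f_equal.
Qed.

Lemma P3_cont {X : Type} (OX : (X -> Prop) -> Prop) (a b c : I -> X) :
  continuous I_open OX a -> continuous I_open OX b -> continuous I_open OX c ->
  a I1 = b I0 -> b I1 = c I0 ->
  continuous (mopen dR) OX (P3 a b c).
Proof.
  intros Ha Hb Hc E1 E2.
  apply (paste dR OX (fun r => r + -1) (P3 a b c) (fun r => a (clampI r))
           (fun r => P2 b c (r + -1))).
  - apply rcont_sub1.
  - apply (cont_clamp_comp dR OX a (fun r => r)); auto. apply rcont_id.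
  - apply (comp_cont dR dR OX (P2 b c) (fun r => r + -1)).
    + apply P2_cont; auto.
    + apply rcont_sub1.
  - intros q Hq. unfold P3. destruct (Rle_dec q 1); [reflexivity|lra].
  - intros q Hq. unfold P3. destruct (Rle_dec q 1).
    + assert (q = 1) by lra. subst. rewrite clamp1, E1.
      replace (1 + -1) with 0 by ring. unfold P2. destruct (Rle_dec 0 1); [|lra].
      rewrite clamp0; auto.
    + f_equal.
Qed.

Lemma concat_P2 {X : Type} (a b : I -> X) (t : I) :
  concat_fun a b t = P2 a b (2 * proj1_sig t).
Proof.
  unfold concat_fun, P2.
  destruct (Rle_dec (proj1_sig t) (1/2)); destruct (Rle_dec (2 * proj1_sig t) 1); try lra;
  reflexivity.
Qed.

Lemma rcont_lin {Z : Type} (d : Z -> Z -> R) (f : Z -> R) (u v : R) :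
  rcont d f -> rcont d (fun z => u * f z + v).
Proof. intros H. apply rcont_plus; [apply rcont_scal; auto|apply rcont_const]. Qed.

Lemma concat_loop {X : Type} (OX : (X -> Prop) -> Prop) (x0 : X) (a b : I -> X) :
  is_loop OX x0 a -> is_loop OX x0 b -> is_loop OX x0 (concat_fun a b).
Proof.
  intros [Ha [Ha0 Ha1]] [Hb [Hb0 Hb1]]. split; [|split].
  - apply cont_I_iff.
    assert (E : concat_fun a b = fun t => P2 a b (2 * proj1_sig t + 0)).
    { apply functional_extensionality; intros t. rewrite concat_P2. f_equal; ring. }
    rewrite E. apply (comp_cont dI dR OX (P2 a b)).
    + apply P2_cont; [apply Ha|apply Hb|congruence].
    + apply rcont_lin, rcont_I.
  - unfold concat_fun; simpl. destruct (Rle_dec 0 (1/2)); [|lra].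
    replace (2 * 0) with 0 by ring. rewrite clamp0; auto.
  - unfold concat_fun; simpl. destruct (Rle_dec 1 (1/2)); [lra|].
    replace (2 * 1 - 1) with 1 by ring. rewrite clamp1; auto.
Qed.

Lemma rev_loop {X : Type} (OX : (X -> Prop) -> Prop) (x0 : X) (a : I -> X) :
  is_loop OX x0 a -> is_loop OX x0 (fun t => a (revI t)).
Proof.
  intros [Ha [Ha0 Ha1]]. split; [|split].
  - apply cont_I_iff. apply (comp_cont dI dI OX a revI); [apply cont_I_iff; auto|apply mcont_revI].
  - replace (revI I0) with I1; auto. apply Ieq; simpl; ring.
  - replace (revI I1) with I0; auto. apply Ieq; simpl; ring.
Qed.

Lemma comp_loop {X X' : Type} (OX : (X -> Prop) -> Prop) (x0 : X)
  (OX' : (X' -> Prop) -> Prop) (x0' : X') (f : X -> X') (a : I -> X) :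
  continuous OX OX' f -> f x0 = x0' ->
  is_loop OX x0 a -> is_loop OX' x0' (fun t => f (a t)).
Proof.
  intros Hf Hf0 [Ha [Ha0 Ha1]]. split; [|split].
  - apply (cont_compose _ OX); auto.
  - rewrite Ha0; auto.
  - rewrite Ha1; auto.
Qed.

Lemma pair_cont {Z X Y : Type} (d : Z -> Z -> R) (OX : (X -> Prop) -> Prop)
  (OY : (Y -> Prop) -> Prop) (f : Z -> X) (g : Z -> Y) :
  continuous (mopen d) OX f -> continuous (mopen d) OY g ->
  continuous (mopen d) (prod_open OX OY) (fun z => (f z, g z)).
Proof.
  intros Hf Hg W HW p Hp.
  destruct (HW _ Hp) as [A [B [HA [HB [HAz [HBz Hq]]]]]].
  destruct (Hf A HA p HAz) as [e1 [He1 H1]]. destruct (Hg B HB p HBz) as [e2 [He2 H2]].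
  exists (Rmin e1 e2); split; [apply Rmin_glb_lt; auto|]. intros q Hqq.
  apply (Hq (f q, g q)); [apply H1|apply H2]; eapply Rlt_le_trans; eauto;
  [apply Rmin_l|apply Rmin_r].
Qed.

Lemma rcont_opp {Z : Type} (d : Z -> Z -> R) f : rcont d f -> rcont d (fun z => - f z).
Proof. intros H p e He. destruct (H p e He) as [del [Hd H']]. exists del; split; auto.
  intros q Hq. unfold dR in *. replace (- f p - - f q) with (- (f p - f q)) by ring.
  rewrite Rabs_Ropp; auto. Qed.
Lemma rcont_minus {Z : Type} (d : Z -> Z -> R) f g :
  rcont d f -> rcont d g -> rcont d (fun z => f z - g z).
Proof. intros Hf Hg. apply (rcont_plus d f (fun z => - g z)); auto. apply rcont_opp; auto. Qed.

Ltac rc := repeat (first [apply rcont_const | apply rcont_fst | apply rcont_snd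
  | apply rcont_I | apply rcont_id | apply rcont_minus | apply rcont_plus | apply rcont_mul
  | apply rcont_opp | apply rcont_min | apply rcont_max]).

Lemma revI0 : revI I0 = I1. Proof. apply Ieq; simpl; ring. Qed.
Lemma revI1 : revI I1 = I0. Proof. apply Ieq; simpl; ring. Qed.

Lemma cont_II_clamp2 {X : Type} (OX : (X -> Prop) -> Prop) (H : I * I -> X) (f g : I * I -> R) :
  continuous (prod_open I_open I_open) OX H -> rcont dII f -> rcont dII g ->
  continuous (mopen dII) OX (fun p : I * I => H (clampI (f p), clampI (g p))).
Proof.
  intros HH Hf Hg. apply cont_II_iff in HH.
  apply (comp_cont dII dII OX H (fun p : I * I => (clampI (f p), clampI (g p)))); auto.
  apply mcont_pair2; apply rcont_clamp; auto.
Qed.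

Lemma homotopic_refl {X : Type} (OX : (X -> Prop) -> Prop) (x0 : X) (a : I -> X) :
  is_loop OX x0 a -> homotopic OX x0 a a.
Proof.
  intros [Ha [Ha0 Ha1]]. exists (fun p : I * I => a (fst p)). split; [|split; [|split]]; auto.
  apply cont_II_iff. apply (comp_cont dII dI OX a (@fst I I)); [apply cont_I_iff; auto|apply mcont_fst].
Qed.

Lemma homotopic_sym {X : Type} (OX : (X -> Prop) -> Prop) (x0 : X) (a b : I -> X) :
  homotopic OX x0 a b -> homotopic OX x0 b a.
Proof.
  intros [H [HH [H0 [H1 He]]]]. exists (fun p : I * I => H (fst p, revI (snd p))).
  split; [|split; [|split]].
  - apply cont_II_iff. apply cont_II_iff in HH.
    apply (comp_cont dII dII OX H (fun p : I * I => (fst p, revI (snd p)))); auto.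
    apply mcont_pair2; [apply mcont_fst|]. apply (mcont_comp dII dI dI); [apply mcont_snd|apply mcont_revI].
  - intros s; simpl. rewrite revI0; auto.
  - intros s; simpl. rewrite revI1; auto.
  - intros t; simpl; apply He.
Qed.

Lemma homotopic_trans {X : Type} (OX : (X -> Prop) -> Prop) (x0 : X) (a b c : I -> X) :
  homotopic OX x0 a b -> homotopic OX x0 b c -> homotopic OX x0 a c.
Proof.
  intros [H [HH [H0 [H1 He]]]] [K [HK [K0 [K1 Ke]]]].
  exists (fun p : I * I => if Rle_dec (proj1_sig (snd p)) (1/2)
                   then H (fst p, clampI (2 * proj1_sig (snd p)))
                   else K (fst p, clampI (2 * proj1_sig (snd p) - 1))).
  split; [|split; [|split]].
  - apply cont_II_iff.
    apply (paste dII OX (fun p : I * I => proj1_sig (snd p) - 1/2) _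
             (fun p : I * I => H (clampI (proj1_sig (fst p)), clampI (2 * proj1_sig (snd p))))
             (fun p : I * I => K (clampI (proj1_sig (fst p)), clampI (2 * proj1_sig (snd p) - 1)))).
    + rc.
    + apply cont_II_clamp2; auto; rc.
    + apply cont_II_clamp2; auto; rc.
    + intros q Hq. cbv beta. rewrite clamp_I. match goal with |- context [Rle_dec ?a ?b] => destruct (Rle_dec a b) end; [reflexivity|lra].
    + intros q Hq. cbv beta. rewrite clamp_I. match goal with |- context [Rle_dec ?a ?b] => destruct (Rle_dec a b) end; [|reflexivity].
      assert (E : proj1_sig (snd q) = 1/2) by lra. rewrite E.
      replace (2 * (1/2) - 1) with 0 by field. replace (2 * (1/2)) with 1 by field.
      rewrite clamp1, clamp0, H1, K0. reflexivity.
  - intros s; simpl. destruct (Rle_dec 0 (1/2)); [|lra].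
    replace (2 * 0) with 0 by ring. rewrite clamp0; auto.
  - intros s; simpl. destruct (Rle_dec 1 (1/2)); [lra|].
    replace (2 * 1 - 1) with 1 by ring. rewrite clamp1; auto.
  - intros t; simpl. destruct (Rle_dec _ _); [apply He|apply Ke].
Qed.

Lemma homotopic_concat {X : Type} (OX : (X -> Prop) -> Prop) (x0 : X) (a a' b b' : I -> X) :
  homotopic OX x0 a a' -> homotopic OX x0 b b' ->
  homotopic OX x0 (concat_fun a b) (concat_fun a' b').
Proof.
  intros [H [HH [H0 [H1 He]]]] [K [HK [K0 [K1 Ke]]]].
  exists (fun p : I * I => if Rle_dec (proj1_sig (fst p)) (1/2)
                   then H (clampI (2 * proj1_sig (fst p)), snd p)
                   else K (clampI (2 * proj1_sig (fst p) - 1), snd p)).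
  split; [|split; [|split]].
  - apply cont_II_iff.
    apply (paste dII OX (fun p : I * I => proj1_sig (fst p) - 1/2) _
             (fun p : I * I => H (clampI (2 * proj1_sig (fst p)), clampI (proj1_sig (snd p))))
             (fun p : I * I => K (clampI (2 * proj1_sig (fst p) - 1), clampI (proj1_sig (snd p))))).
    + rc.
    + apply cont_II_clamp2; auto; rc.
    + apply cont_II_clamp2; auto; rc.
    + intros q Hq. cbv beta. rewrite clamp_I. match goal with |- context [Rle_dec ?a ?b] => destruct (Rle_dec a b) end; [reflexivity|lra].
    + intros q Hq. cbv beta. rewrite clamp_I. match goal with |- context [Rle_dec ?a ?b] => destruct (Rle_dec a b) end; [|reflexivity].
      assert (E : proj1_sig (fst q) = 1/2) by lra. rewrite E.
      replace (2 * (1/2) - 1) with 0 by field. replace (2 * (1/2)) with 1 by field.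
      rewrite clamp1, clamp0. destruct (He (snd q)) as [_ ->]. destruct (Ke (snd q)) as [-> _].
      reflexivity.
  - intros s; unfold concat_fun; simpl. destruct (Rle_dec _ _); auto.
  - intros s; unfold concat_fun; simpl. destruct (Rle_dec _ _); auto.
  - intros t; simpl. destruct (Rle_dec 0 (1/2)); [|lra]. destruct (Rle_dec 1 (1/2)); [lra|].
    replace (2 * 0) with 0 by ring. replace (2 * 1 - 1) with 1 by ring.
    rewrite clamp0, clamp1. split; [apply He|apply Ke].
Qed.

Lemma homotopic_rev {X : Type} (OX : (X -> Prop) -> Prop) (x0 : X) (a b : I -> X) :
  homotopic OX x0 a b -> homotopic OX x0 (fun t => a (revI t)) (fun t => b (revI t)).
Proof.
  intros [H [HH [H0 [H1 He]]]]. exists (fun p : I * I => H (revI (fst p), snd p)).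
  split; [|split; [|split]].
  - apply cont_II_iff. apply cont_II_iff in HH.
    apply (comp_cont dII dII OX H (fun p : I * I => (revI (fst p), snd p))); auto.
    apply mcont_pair2; [|apply mcont_snd]. apply (mcont_comp dII dI dI); [apply mcont_fst|apply mcont_revI].
  - intros s; simpl; auto.
  - intros s; simpl; auto.
  - intros t; simpl. rewrite revI0, revI1. split; apply He.
Qed.

Lemma homotopic_comp {X X' : Type} (OX : (X -> Prop) -> Prop) (x0 : X)
  (OX' : (X' -> Prop) -> Prop) (x0' : X') (f : X -> X') (a b : I -> X) :
  continuous OX OX' f -> f x0 = x0' ->
  homotopic OX x0 a b -> homotopic OX' x0' (fun t => f (a t)) (fun t => f (b t)).
Proof.
  intros Hf Hf0 [H [HH [H0 [H1 He]]]]. exists (fun p : I * I => f (H p)).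
  split; [|split; [|split]].
  - apply (cont_compose _ OX); auto.
  - intros s; rewrite H0; auto.
  - intros s; rewrite H1; auto.
  - intros t; destruct (He t) as [-> ->]; auto.
Qed.

Lemma homotopic_pair {X Y : Type} (OX : (X -> Prop) -> Prop) (x0 : X)
  (OY : (Y -> Prop) -> Prop) (y0 : Y) (a b : I -> X) (a' b' : I -> Y) :
  homotopic OX x0 a b -> homotopic OY y0 a' b' ->
  homotopic (prod_open OX OY) (x0, y0) (fun t => (a t, a' t)) (fun t => (b t, b' t)).
Proof.
  intros [H [HH [H0 [H1 He]]]] [K [HK [K0 [K1 Ke]]]]. exists (fun p : I * I => (H p, K p)).
  split; [|split; [|split]].
  - apply cont_II_iff. apply cont_II_iff in HH. apply cont_II_iff in HK.
    apply pair_cont; auto.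
  - intros s; rewrite H0, K0; auto.
  - intros s; rewrite H1, K1; auto.
  - intros t; destruct (He t) as [-> ->]; destruct (Ke t) as [-> ->]; auto.
Qed.

Lemma pi1_eq {X : Type} (OX : (X -> Prop) -> Prop) (x0 : X) (C D : pi1 OX x0) :
  proj1_sig C = proj1_sig D -> C = D.
Proof. destruct C as [C HC], D as [D HD]; simpl; intros ->. f_equal; apply proof_irrelevance. Qed.

Lemma Omega_eq {X : Type} (OX : (X -> Prop) -> Prop) (x0 : X) (a b : Omega OX x0) :
  (forall t, proj1_sig a t = proj1_sig b t) -> a = b.
Proof.
  destruct a as [a Ha], b as [b Hb]; simpl; intros E.
  assert (a = b) by (apply functional_extensionality; auto). subst.
  f_equal; apply proof_irrelevance.
Qed.

Lemma cls_eq {X : Type} (OX : (X -> Prop) -> Prop) (x0 : X) (a b : Omega OX x0) :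
  homotopic OX x0 (proj1_sig a) (proj1_sig b) -> cls a = cls b.
Proof.
  intros H. apply pi1_eq; simpl. apply pext; intros c; split; intros Hc.
  - eapply homotopic_trans; [apply homotopic_sym, H|exact Hc].
  - eapply homotopic_trans; [exact H|exact Hc].
Qed.

Lemma cls_eq_inv {X : Type} (OX : (X -> Prop) -> Prop) (x0 : X) (a b : Omega OX x0) :
  cls a = cls b -> homotopic OX x0 (proj1_sig a) (proj1_sig b).
Proof.
  intros E. assert (H : proj1_sig (cls b) b) by (simpl; apply homotopic_refl, (proj2_sig b)).
  rewrite <- E in H. exact H.
Qed.

Lemma pi1_mem {X : Type} (OX : (X -> Prop) -> Prop) (x0 : X) (C : pi1 OX x0) (b : Omega OX x0) :
  proj1_sig C b -> C = cls b.
Proof.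
  destruct C as [C [e He]]; simpl; intros Hb. apply pi1_eq; simpl.
  apply pext; intros v. rewrite He. apply He in Hb. split; intros Hv.
  - eapply homotopic_trans; [apply homotopic_sym, Hb|exact Hv].
  - eapply homotopic_trans; [exact Hb|exact Hv].
Qed.

Lemma pi1_surj {X : Type} (OX : (X -> Prop) -> Prop) (x0 : X) (C : pi1 OX x0) :
  exists a, C = cls a.
Proof.
  destruct C as [C [e He]]. exists e. apply pi1_mem; simpl. apply He.
  apply homotopic_refl, (proj2_sig e).
Qed.

Lemma cls_ext {X : Type} (OX : (X -> Prop) -> Prop) (x0 : X) (a b : Omega OX x0) :
  (forall t, proj1_sig a t = proj1_sig b t) -> cls a = cls b.
Proof. intros E. rewrite (Omega_eq OX x0 a b E). reflexivity. Qed.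

Definition om_concat {X : Type} {OX : (X -> Prop) -> Prop} {x0 : X} (a b : Omega OX x0)
  : Omega OX x0 :=
  exist _ (concat_fun (proj1_sig a) (proj1_sig b)) (concat_loop OX x0 _ _ (proj2_sig a) (proj2_sig b)).
Definition om_rev {X : Type} {OX : (X -> Prop) -> Prop} {x0 : X} (a : Omega OX x0)
  : Omega OX x0 :=
  exist _ (fun t => proj1_sig a (revI t)) (rev_loop OX x0 _ (proj2_sig a)).
Definition om_comp {X X' : Type} {OX : (X -> Prop) -> Prop} {x0 : X}
  {OX' : (X' -> Prop) -> Prop} {x0' : X'} (f : X -> X')
  (Hf : continuous OX OX' f) (Hf0 : f x0 = x0') (a : Omega OX x0) : Omega OX' x0' :=
  exist _ (fun t => f (proj1_sig a t)) (comp_loop OX x0 OX' x0' f _ Hf Hf0 (proj2_sig a)).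

Lemma pi1_mul_cls {X : Type} (OX : (X -> Prop) -> Prop) (x0 : X) (a b : Omega OX x0) :
  pi1_mul OX x0 (cls a) (cls b) = cls (om_concat a b).
Proof.
  unfold pi1_mul.
  match goal with |- epsilon ?i ?P = _ => assert (Ex : exists E, P E);
    [|destruct (epsilon_spec i P Ex) as [a' [b' [c [Ha [Hb [Hc Hcat]]]]]]] end.
  - exists (cls (om_concat a b)), a, b, (om_concat a b). simpl.
    repeat split; try apply homotopic_refl; try apply (proj2_sig a); try apply (proj2_sig b).
    apply concat_loop; [apply (proj2_sig a)|apply (proj2_sig b)].
  - rewrite (pi1_mem _ _ _ _ Hc). simpl in Ha, Hb.
    rewrite (cls_ext OX x0 c (om_concat a' b') Hcat).
    apply cls_eq; simpl. apply homotopic_concat; apply homotopic_sym; auto.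
Qed.

Lemma pi1_inv_cls {X : Type} (OX : (X -> Prop) -> Prop) (x0 : X) (a : Omega OX x0) :
  pi1_inv OX x0 (cls a) = cls (om_rev a).
Proof.
  unfold pi1_inv.
  match goal with |- epsilon ?i ?P = _ => assert (Ex : exists E, P E);
    [|destruct (epsilon_spec i P Ex) as [a' [c [Ha [Hc Hrev]]]]] end.
  - exists (cls (om_rev a)), a, (om_rev a). simpl.
    repeat split; try apply homotopic_refl; try apply (proj2_sig a).
    apply rev_loop, (proj2_sig a).
  - rewrite (pi1_mem _ _ _ _ Hc). simpl in Ha.
    rewrite (cls_ext OX x0 c (om_rev a') Hrev).
    apply cls_eq; simpl. apply homotopic_rev; apply homotopic_sym; auto.
Qed.

Lemma pi1_map_cls {X X' : Type} (OX : (X -> Prop) -> Prop) (x0 : X)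
  (OX' : (X' -> Prop) -> Prop) (x0' : X') (f : X -> X')
  (Hf : continuous OX OX' f) (Hf0 : f x0 = x0') (a : Omega OX x0) :
  pi1_map OX x0 OX' x0' f (cls a) = cls (om_comp f Hf Hf0 a).
Proof.
  unfold pi1_map.
  match goal with |- epsilon ?i ?P = _ => assert (Ex : exists E, P E);
    [|destruct (epsilon_spec i P Ex) as [a' [c [Ha [Hc Hcomp]]]]] end.
  - exists (cls (om_comp f Hf Hf0 a)), a, (om_comp f Hf Hf0 a). simpl.
    repeat split; try apply homotopic_refl; try apply (proj2_sig a).
    all: try (apply (comp_loop OX x0); auto; apply (proj2_sig a)).
  - rewrite (pi1_mem _ _ _ _ Hc). simpl in Ha.
    rewrite (cls_ext OX' x0' c (om_comp f Hf Hf0 a') Hcomp).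
    apply cls_eq; simpl. apply (homotopic_comp OX x0); auto. apply homotopic_sym; auto.
Qed.

Ltac solve_pw := repeat match goal with |- context [Rle_dec ?x ?y] => destruct (Rle_dec x y) end;
  try (exfalso; nra); try reflexivity; try (f_equal; apply clampI_eq; nra).

Lemma assocL {X : Type} (a b c : I -> X) (t : I) :
  concat_fun (concat_fun a b) c t = P3 a b c (Rmin (4 * proj1_sig t) (2 * proj1_sig t + 1)).
Proof.
  destruct t as [s Hs]. unfold concat_fun. cbv beta. cbn [proj1_sig].
  destruct (Rle_dec s (1/2)).
  - rewrite (clamp_val (2*s)) by nra. rewrite Rmin_left by nra. unfold P3, P2. solve_pw.
  - rewrite Rmin_right by nra. unfold P3, P2. solve_pw.
Qed.

Lemma assocR {X : Type} (a b c : I -> X) (t : I) :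
  concat_fun a (concat_fun b c) t = P3 a b c (Rmax (2 * proj1_sig t) (4 * proj1_sig t - 1)).
Proof.
  destruct t as [s Hs]. unfold concat_fun. cbv beta. cbn [proj1_sig].
  destruct (Rle_dec s (1/2)).
  - rewrite Rmax_left by nra. unfold P3, P2. solve_pw.
  - rewrite (clamp_val (2*s-1)) by nra. rewrite Rmax_right by nra. unfold P3, P2. solve_pw.
Qed.

Lemma cont_path_comp {X : Type} (OX : (X -> Prop) -> Prop) (P : R -> X) (g : I * I -> R) :
  continuous (mopen dR) OX P -> rcont dII g ->
  continuous (prod_open I_open I_open) OX (fun p => P (g p)).
Proof. intros HP Hg. apply cont_II_iff. apply (comp_cont dII dR OX P g); auto. Qed.

Lemma loop_c {X : Type} {OX : (X -> Prop) -> Prop} {x0 : X} (a : Omega OX x0) :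
  continuous I_open OX (proj1_sig a).
Proof. apply (proj2_sig a). Qed.
Lemma loop_0 {X : Type} {OX : (X -> Prop) -> Prop} {x0 : X} (a : Omega OX x0) :
  proj1_sig a I0 = x0.
Proof. apply (proj2_sig a). Qed.
Lemma loop_1 {X : Type} {OX : (X -> Prop) -> Prop} {x0 : X} (a : Omega OX x0) :
  proj1_sig a I1 = x0.
Proof. apply (proj2_sig a). Qed.

Lemma loop_at0 {X : Type} {OX : (X -> Prop) -> Prop} {x0 : X} (a : Omega OX x0) (t : I) :
  proj1_sig t = 0 -> proj1_sig a t = x0.
Proof. intros H. replace t with I0 by (apply Ieq; simpl; nra). apply loop_0. Qed.
Lemma loop_at1 {X : Type} {OX : (X -> Prop) -> Prop} {x0 : X} (a : Omega OX x0) (t : I) :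
  proj1_sig t = 1 -> proj1_sig a t = x0.
Proof. intros H. replace t with I1 by (apply Ieq; simpl; nra). apply loop_1. Qed.

Lemma P3_arg {X : Type} (a b c : I -> X) x y : x = y -> P3 a b c x = P3 a b c y.
Proof. intros ->; reflexivity. Qed.
Lemma P2_arg {X : Type} (a b : I -> X) x y : x = y -> P2 a b x = P2 a b y.
Proof. intros ->; reflexivity. Qed.

Lemma cls_assoc {X : Type} (OX : (X -> Prop) -> Prop) (x0 : X) (a b c : Omega OX x0) :
  cls (om_concat (om_concat a b) c) = cls (om_concat a (om_concat b c)).
Proof.
  apply cls_eq; simpl.
  exists (fun p : I * I => P3 (proj1_sig a) (proj1_sig b) (proj1_sig c)
     ((1 - proj1_sig (snd p)) * Rmin (4 * proj1_sig (fst p)) (2 * proj1_sig (fst p) + 1)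
      + proj1_sig (snd p) * Rmax (2 * proj1_sig (fst p)) (4 * proj1_sig (fst p) - 1))).
  split; [|split; [|split]].
  - apply cont_path_comp; [|rc].
    apply P3_cont; try apply loop_c; rewrite loop_1, loop_0; auto.
  - intros s. rewrite assocL. apply P3_arg. simpl; ring.
  - intros s. rewrite assocR. apply P3_arg. simpl; ring.
  - intros t; cbn [proj1_sig fst snd I0 I1]. split.
    + rewrite (P3_arg _ _ _ _ 0).
      * unfold P3. destruct (Rle_dec 0 1); [|nra]. rewrite clamp0; apply loop_0.
      * rewrite Rmin_left, Rmax_left by nra. ring.
    + rewrite (P3_arg _ _ _ _ 3).
      * unfold P3, P2. destruct (Rle_dec 3 1); [nra|]. destruct (Rle_dec (3-1) 1); [nra|].
        replace (3 - 1 - 1) with 1 by ring. rewrite clamp1; apply loop_1.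
      * rewrite Rmin_right, Rmax_right by nra. ring.
Qed.

Lemma cls_lid {X : Type} (OX : (X -> Prop) -> Prop) (x0 : X) (a : Omega OX x0) :
  cls (om_concat (const_loop OX x0) a) = cls a.
Proof.
  apply cls_eq; simpl.
  exists (fun p : I * I => P2 (fun _ => x0) (proj1_sig a)
     ((1 - proj1_sig (snd p)) * (2 * proj1_sig (fst p)) + proj1_sig (snd p) * (1 + proj1_sig (fst p)))).
  split; [|split; [|split]].
  - apply cont_path_comp; [|rc].
    apply P2_cont; try apply loop_c; [apply (proj2_sig (const_loop OX x0))|rewrite loop_0; auto].
  - intros s. rewrite concat_P2. apply P2_arg. simpl; ring.
  - intros [s Hs]. cbn [proj1_sig fst snd I0 I1]. unfold P2. destruct (Rle_dec _ _).
    + first [apply loop_at0 | symmetry; apply loop_at0]. cbn [proj1_sig]; nra.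
    + f_equal. apply Ieq. rewrite clamp_val; cbn [proj1_sig]; nra.
  - intros t; cbn [proj1_sig fst snd I0 I1]. split.
    + unfold P2. destruct (Rle_dec _ _); auto. destruct t as [t Ht]; cbn [proj1_sig fst snd I0 I1] in *; nra.
    + unfold P2. destruct (Rle_dec _ _).
      * destruct t as [t Ht]; cbn [proj1_sig fst snd I0 I1] in *; nra.
      * first [apply loop_at1 | symmetry; apply loop_at1]. rewrite clamp_val; cbn [proj1_sig fst snd I0 I1]; nra.
Qed.

Lemma cls_rid {X : Type} (OX : (X -> Prop) -> Prop) (x0 : X) (a : Omega OX x0) :
  cls (om_concat a (const_loop OX x0)) = cls a.
Proof.
  apply cls_eq; simpl.
  exists (fun p : I * I => P2 (proj1_sig a) (fun _ => x0)
     ((1 - proj1_sig (snd p)) * (2 * proj1_sig (fst p)) + proj1_sig (snd p) * proj1_sig (fst p))).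
  split; [|split; [|split]].
  - apply cont_path_comp; [|rc].
    apply P2_cont; try apply loop_c; [apply (proj2_sig (const_loop OX x0))|rewrite loop_1; auto].
  - intros s. rewrite concat_P2. apply P2_arg. simpl; ring.
  - intros [s Hs]. cbn [proj1_sig fst snd I0 I1]. unfold P2. destruct (Rle_dec _ _).
    + f_equal. apply Ieq. rewrite clamp_val; cbn [proj1_sig fst snd I0 I1]; nra.
    + exfalso; apply n; nra.
  - intros t; cbn [proj1_sig fst snd I0 I1]. split.
    + unfold P2. destruct (Rle_dec _ _).
      * first [apply loop_at0 | symmetry; apply loop_at0]. rewrite clamp_val; cbn [proj1_sig fst snd I0 I1]; nra.
      * destruct t as [t Ht]; cbn [proj1_sig fst snd I0 I1] in *; nra.
    + unfold P2. destruct (Rle_dec _ _); auto.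
      first [apply loop_at1 | symmetry; apply loop_at1]. rewrite clamp_val; destruct t as [t Ht]; cbn [proj1_sig fst snd I0 I1] in *; nra.
Qed.

Lemma cls_rinv {X : Type} (OX : (X -> Prop) -> Prop) (x0 : X) (a : Omega OX x0) :
  cls (om_concat a (om_rev a)) = cls (const_loop OX x0).
Proof.
  apply cls_eq; simpl.
  exists (fun p : I * I => proj1_sig a (clampI
     ((1 - proj1_sig (snd p)) * Rmin (2 * proj1_sig (fst p)) (2 - 2 * proj1_sig (fst p))))).
  split; [|split; [|split]].
  - apply cont_II_iff. apply cont_clamp_comp; [apply loop_c|rc].
  - intros [s Hs]. unfold concat_fun; cbn [proj1_sig fst snd I0 I1]. destruct (Rle_dec s (1/2)).
    + f_equal. apply clampI_eq. rewrite Rmin_left by nra. ring.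
    + f_equal. apply Ieq. cbn [proj1_sig revI]. rewrite Rmin_right by nra.
      rewrite !clamp_val by nra. ring.
  - intros s; cbn [proj1_sig fst snd I0 I1]. first [apply loop_at0 | symmetry; apply loop_at0].
    rewrite clamp_val; cbn [proj1_sig fst snd I0 I1]; nra.
  - intros t; cbn [proj1_sig fst snd I0 I1]. split; apply loop_at0;
    [rewrite Rmin_left by nra|rewrite Rmin_right by nra]; rewrite clamp_val; nra.
Qed.

Lemma cls_linv {X : Type} (OX : (X -> Prop) -> Prop) (x0 : X) (a : Omega OX x0) :
  cls (om_concat (om_rev a) a) = cls (const_loop OX x0).
Proof.
  apply cls_eq; simpl.
  exists (fun p : I * I => proj1_sig a (clampI
     (1 - (1 - proj1_sig (snd p)) * Rmin (2 * proj1_sig (fst p)) (2 - 2 * proj1_sig (fst p))))).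
  split; [|split; [|split]].
  - apply cont_II_iff. apply cont_clamp_comp; [apply loop_c|rc].
  - intros [s Hs]. unfold concat_fun; cbn [proj1_sig fst snd I0 I1]. destruct (Rle_dec s (1/2)).
    + f_equal. apply Ieq. cbn [proj1_sig revI]. rewrite Rmin_left by nra.
      rewrite !clamp_val by nra. ring.
    + f_equal. apply clampI_eq. rewrite Rmin_right by nra. ring.
  - intros s; cbn [proj1_sig fst snd I0 I1]. first [apply loop_at1 | symmetry; apply loop_at1].
    rewrite clamp_val; cbn [proj1_sig fst snd I0 I1]; nra.
  - intros t; cbn [proj1_sig fst snd I0 I1]. split; apply loop_at1;
    [rewrite Rmin_left by nra|rewrite Rmin_right by nra]; rewrite clamp_val; nra.
Qed.

Record glaws {G : Type} (mul : G -> G -> G) (inv : G -> G) (one : G) : Prop := {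
  g_assoc : forall x y z, mul (mul x y) z = mul x (mul y z);
  g_lid : forall x, mul one x = x;
  g_rid : forall x, mul x one = x;
  g_linv : forall x, mul (inv x) x = one;
  g_rinv : forall x, mul x (inv x) = one }.

Lemma pi1_laws {X : Type} (OX : (X -> Prop) -> Prop) (x0 : X) :
  glaws (pi1_mul OX x0) (pi1_inv OX x0) (pi1_one OX x0).
Proof.
  unfold pi1_one. split.
  - intros A B C. destruct (pi1_surj _ _ A) as [a ->]. destruct (pi1_surj _ _ B) as [b ->].
    destruct (pi1_surj _ _ C) as [c ->]. rewrite !pi1_mul_cls. apply cls_assoc.
  - intros A. destruct (pi1_surj _ _ A) as [a ->]. rewrite pi1_mul_cls. apply cls_lid.
  - intros A. destruct (pi1_surj _ _ A) as [a ->]. rewrite pi1_mul_cls. apply cls_rid.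
  - intros A. destruct (pi1_surj _ _ A) as [a ->]. rewrite pi1_inv_cls, pi1_mul_cls. apply cls_linv.
  - intros A. destruct (pi1_surj _ _ A) as [a ->]. rewrite pi1_inv_cls, pi1_mul_cls. apply cls_rinv.
Qed.

Lemma pi1_map_mul {X X' : Type} (OX : (X -> Prop) -> Prop) (x0 : X)
  (OX' : (X' -> Prop) -> Prop) (x0' : X') (f : X -> X') :
  continuous OX OX' f -> f x0 = x0' -> forall A B,
  pi1_map OX x0 OX' x0' f (pi1_mul OX x0 A B) =
  pi1_mul OX' x0' (pi1_map OX x0 OX' x0' f A) (pi1_map OX x0 OX' x0' f B).
Proof.
  intros Hf Hf0 A B. destruct (pi1_surj _ _ A) as [a ->]. destruct (pi1_surj _ _ B) as [b ->].
  rewrite pi1_mul_cls, !(pi1_map_cls _ _ _ _ f Hf Hf0), pi1_mul_cls.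
  apply cls_ext; intros t; simpl. unfold concat_fun. destruct (Rle_dec _ _); reflexivity.
Qed.

Lemma pi1_map_inv {X X' : Type} (OX : (X -> Prop) -> Prop) (x0 : X)
  (OX' : (X' -> Prop) -> Prop) (x0' : X') (f : X -> X') :
  continuous OX OX' f -> f x0 = x0' -> forall A,
  pi1_map OX x0 OX' x0' f (pi1_inv OX x0 A) = pi1_inv OX' x0' (pi1_map OX x0 OX' x0' f A).
Proof.
  intros Hf Hf0 A. destruct (pi1_surj _ _ A) as [a ->].
  rewrite pi1_inv_cls, !(pi1_map_cls _ _ _ _ f Hf Hf0), pi1_inv_cls.
  apply cls_ext; intros t; reflexivity.
Qed.

Lemma pi1_map_one {X X' : Type} (OX : (X -> Prop) -> Prop) (x0 : X)
  (OX' : (X' -> Prop) -> Prop) (x0' : X') (f : X -> X') :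
  continuous OX OX' f -> f x0 = x0' ->
  pi1_map OX x0 OX' x0' f (pi1_one OX x0) = pi1_one OX' x0'.
Proof.
  intros Hf Hf0. unfold pi1_one at 1. rewrite (pi1_map_cls _ _ _ _ f Hf Hf0).
  apply cls_ext; intros t; simpl; auto.
Qed.

Definition wmap {S S' : Type} (h : S -> S') (w : word S) : word S' :=
  map (fun p => (fst p, h (snd p))) w.

Lemma fequiv_refl {S : Type} (w : word S) : fequiv S w w.
Proof. apply rst_refl. Qed.
Lemma fequiv_sym {S : Type} (w v : word S) : fequiv S w v -> fequiv S v w.
Proof. apply rst_sym. Qed.
Lemma fequiv_trans {S : Type} (u w v : word S) : fequiv S u w -> fequiv S w v -> fequiv S u v.
Proof. apply rst_trans. Qed.

Lemma fequiv_lift {S S' : Type} (g : word S -> word S') :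
  (forall u v, fstep S u v -> fequiv S' (g u) (g v)) ->
  forall u v, fequiv S u v -> fequiv S' (g u) (g v).
Proof.
  intros Hg u v H. induction H.
  - apply Hg; auto.
  - apply fequiv_refl.
  - apply fequiv_sym; auto.
  - eapply fequiv_trans; eauto.
Qed.

Lemma fequiv_app_l {S : Type} (u v w : word S) : fequiv S v w -> fequiv S (u ++ v) (u ++ w).
Proof.
  apply (fequiv_lift (fun v => u ++ v)). intros v' w' [w1 [w2 [b [s [-> ->]]]]].
  apply rst_step. exists (u ++ w1), w2, b, s. rewrite !app_assoc. auto.
Qed.
Lemma fequiv_app_r {S : Type} (u v w : word S) : fequiv S v w -> fequiv S (v ++ u) (w ++ u).
Proof.
  apply (fequiv_lift (fun v => v ++ u)). intros v' w' [w1 [w2 [b [s [-> ->]]]]].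
  apply rst_step. exists w1, (w2 ++ u), b, s. rewrite <- !app_assoc. auto.
Qed.
Lemma fequiv_app {S : Type} (u u' v v' : word S) :
  fequiv S u u' -> fequiv S v v' -> fequiv S (u ++ v) (u' ++ v').
Proof. intros H1 H2. eapply fequiv_trans; [apply fequiv_app_r; eauto|apply fequiv_app_l; auto]. Qed.

Lemma fequiv_map {S S' : Type} (h : S -> S') (v w : word S) :
  fequiv S v w -> fequiv S' (wmap h v) (wmap h w).
Proof.
  apply (fequiv_lift (wmap h)). intros v' w' [w1 [w2 [b [s [-> ->]]]]].
  apply rst_step. exists (wmap h w1), (wmap h w2), b, (h s). unfold wmap.
  rewrite !map_app. auto.
Qed.

Lemma word_inv_app {S : Type} (u v : word S) : word_inv (u ++ v) = word_inv v ++ word_inv u.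
Proof. unfold word_inv. rewrite map_app, rev_app_distr. auto. Qed.
Lemma word_inv_cons {S : Type} (x : bool * S) (v : word S) :
  word_inv (x :: v) = word_inv v ++ (negb (fst x), snd x) :: nil.
Proof. reflexivity. Qed.

Lemma fequiv_inv {S : Type} (v w : word S) : fequiv S v w -> fequiv S (word_inv v) (word_inv w).
Proof.
  apply (fequiv_lift word_inv). intros v' w' [w1 [w2 [b [s [-> ->]]]]].
  apply rst_step. exists (word_inv w2), (word_inv w1), b, s.
  rewrite !word_inv_app, !word_inv_cons. simpl. rewrite Bool.negb_involutive.
  rewrite <- !app_assoc. simpl. auto.
Qed.

Lemma winv_r {S : Type} (w : word S) : fequiv S (w ++ word_inv w) nil.
Proof.
  induction w as [|x w IH]; [apply fequiv_refl|].
  rewrite word_inv_cons. simpl. rewrite app_assoc.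
  eapply fequiv_trans; [apply (fequiv_app_l (x :: nil)); apply fequiv_app_r, IH|].
  simpl. destruct x as [b s]. apply rst_step. exists nil, nil, b, s. auto.
Qed.

Lemma winv_l {S : Type} (w : word S) : fequiv S (word_inv w ++ w) nil.
Proof.
  induction w as [|x w IH]; [apply fequiv_refl|].
  rewrite word_inv_cons, <- app_assoc. simpl.
  eapply fequiv_trans; [|apply IH]. apply fequiv_app_l.
  destruct x as [b s]. simpl. apply rst_step. exists nil, w, (negb b), s.
  rewrite Bool.negb_involutive. auto.
Qed.

Lemma fcls_eq {S : Type} (w v : word S) : fequiv S w v -> fcls w = fcls v.
Proof.
  intros H. unfold fcls. assert (E : (fun u => fequiv S w u) = (fun u => fequiv S v u)).
  { apply pext; intros u; split; intros Hu; eapply fequiv_trans; eauto. apply fequiv_sym; auto. }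
  apply eq_sig_hprop; [intros; apply proof_irrelevance|]. simpl. exact E.
Qed.

Lemma fcls_frep {S : Type} (C : FG S) : fcls (frep C) = C.
Proof.
  unfold frep. destruct (constructive_indefinite_description _ _) as [w Hw]. simpl.
  apply eq_sig_hprop; [intros; apply proof_irrelevance|]. simpl.
  apply pext; intros v. rewrite Hw. tauto.
Qed.

Lemma frep_fcls {S : Type} (w : word S) : fequiv S w (frep (fcls w)).
Proof.
  unfold frep. destruct (constructive_indefinite_description _ _) as [v Hv]. simpl.
  apply fequiv_sym. apply Hv. apply fequiv_refl.
Qed.

Lemma FG_surj {S : Type} (C : FG S) : exists w, C = fcls w.
Proof. exists (frep C). symmetry; apply fcls_frep. Qed.

Lemma fmul_fcls {S : Type} (u v : word S) : fmul (fcls u) (fcls v) = fcls (u ++ v).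
Proof. unfold fmul. apply fcls_eq. apply fequiv_sym, fequiv_app; apply frep_fcls. Qed.
Lemma finv_fcls {S : Type} (u : word S) : finv (fcls u) = fcls (word_inv u).
Proof. unfold finv. apply fcls_eq. apply fequiv_inv, fequiv_sym, frep_fcls. Qed.

Definition Fmap {S S' : Type} (h : S -> S') (C : FG S) : FG S' := fcls (wmap h (frep C)).

Lemma Fmap_fcls {S S' : Type} (h : S -> S') (w : word S) : Fmap h (fcls w) = fcls (wmap h w).
Proof. unfold Fmap. apply fcls_eq. apply fequiv_map, fequiv_sym, frep_fcls. Qed.

Lemma Fmap_mul {S S' : Type} (h : S -> S') (C D : FG S) :
  Fmap h (fmul C D) = fmul (Fmap h C) (Fmap h D).
Proof.
  destruct (FG_surj C) as [u ->]. destruct (FG_surj D) as [v ->].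
  rewrite fmul_fcls, !Fmap_fcls, fmul_fcls. unfold wmap; rewrite map_app; auto.
Qed.
Lemma Fmap_inv {S S' : Type} (h : S -> S') (C : FG S) : Fmap h (finv C) = finv (Fmap h C).
Proof.
  destruct (FG_surj C) as [u ->]. rewrite finv_fcls, !Fmap_fcls, finv_fcls. f_equal.
  unfold wmap, word_inv. rewrite map_rev, !map_map. auto.
Qed.
Lemma Fmap_gen {S S' : Type} (h : S -> S') (x : S) : Fmap h (fgen x) = fgen (h x).
Proof. unfold fgen. rewrite Fmap_fcls. reflexivity. Qed.

Lemma weval_suffix {G : Type} (mul : G -> G -> G) (inv : G -> G) (one : G) (u v v' : word G) :
  word_eval mul inv one v = word_eval mul inv one v' ->
  word_eval mul inv one (u ++ v) = word_eval mul inv one (u ++ v').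
Proof. intros H. induction u as [|x u IH]; simpl; auto. rewrite IH; auto. Qed.

Lemma weval_fequiv {G : Type} (mul : G -> G -> G) (inv : G -> G) (one : G) :
  glaws mul inv one -> forall w v, fequiv G w v ->
  word_eval mul inv one w = word_eval mul inv one v.
Proof.
  intros L w v H. induction H as [u v [w1 [w2 [b [s [-> ->]]]]]| | |]; auto; [|congruence].
  apply weval_suffix. simpl.
  destruct b; simpl; rewrite <- (g_assoc _ _ _ L);
    [rewrite (g_rinv _ _ _ L)|rewrite (g_linv _ _ _ L)]; apply (g_lid _ _ _ L).
Qed.

Lemma weval_app {G : Type} (mul : G -> G -> G) (inv : G -> G) (one : G) :
  glaws mul inv one -> forall u v,
  word_eval mul inv one (u ++ v) = mul (word_eval mul inv one u) (word_eval mul inv one v).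
Proof.
  intros L u v. induction u as [|x u IH]; simpl.
  - rewrite (g_lid _ _ _ L); auto.
  - rewrite IH, (g_assoc _ _ _ L); auto.
Qed.

Lemma mG_fcls {G : Type} (mul : G -> G -> G) (inv : G -> G) (one : G) :
  glaws mul inv one -> forall w, mG mul inv one (fcls w) = word_eval mul inv one w.
Proof. intros L w. unfold mG. apply weval_fequiv; auto. apply fequiv_sym, frep_fcls. Qed.

Lemma mG_fmul {G : Type} (mul : G -> G -> G) (inv : G -> G) (one : G) :
  glaws mul inv one -> forall C D,
  mG mul inv one (fmul C D) = mul (mG mul inv one C) (mG mul inv one D).
Proof.
  intros L C D. destruct (FG_surj C) as [u ->]. destruct (FG_surj D) as [v ->].
  rewrite fmul_fcls, !mG_fcls by auto. apply weval_app; auto.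
Qed.

Lemma mG_fgen {G : Type} (mul : G -> G -> G) (inv : G -> G) (one : G) :
  glaws mul inv one -> forall x, mG mul inv one (fgen x) = x.
Proof. intros L x. unfold fgen. rewrite mG_fcls by auto. simpl. apply (g_rid _ _ _ L). Qed.

Lemma weval_map {G G' : Type} (mul : G -> G -> G) (inv : G -> G) (one : G)
  (mul' : G' -> G' -> G') (inv' : G' -> G') (one' : G') (h : G -> G') :
  (forall x y, h (mul x y) = mul' (h x) (h y)) -> (forall x, h (inv x) = inv' (h x)) ->
  h one = one' -> forall w,
  word_eval mul' inv' one' (wmap h w) = h (word_eval mul inv one w).
Proof.
  intros Hm Hi Ho w. induction w as [|[b s] w IH]; simpl; auto.
  rewrite IH, Hm. destruct b; simpl; auto. rewrite Hi; auto.
Qed.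

Lemma mG_Fmap {G G' : Type} (mul : G -> G -> G) (inv : G -> G) (one : G)
  (mul' : G' -> G' -> G') (inv' : G' -> G') (one' : G') (h : G -> G') :
  glaws mul inv one -> glaws mul' inv' one' ->
  (forall x y, h (mul x y) = mul' (h x) (h y)) -> (forall x, h (inv x) = inv' (h x)) ->
  h one = one' -> forall C,
  mG mul' inv' one' (Fmap h C) = h (mG mul inv one C).
Proof.
  intros L L' Hm Hi Ho C. destruct (FG_surj C) as [u ->].
  rewrite Fmap_fcls, !mG_fcls by auto. apply weval_map; auto.
Qed.

Lemma mG_inv_cancel {G : Type} (mul : G -> G -> G) (inv : G -> G) (one : G) :
  glaws mul inv one -> forall E C, mG mul inv one E = mG mul inv one C ->
  mG mul inv one (fmul (finv E) C) = one.
Proof.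
  intros L E C H. destruct (FG_surj C) as [c ->]. destruct (FG_surj E) as [e ->].
  rewrite finv_fcls, fmul_fcls, mG_fcls by auto. rewrite !mG_fcls in H by auto.
  rewrite (weval_suffix _ _ _ _ _ e) by auto.
  change one with (word_eval mul inv one nil). apply weval_fequiv; auto. apply winv_l.
Qed.

Lemma fmul_cancel {S : Type} (E C : FG S) : fmul E (fmul (finv E) C) = C.
Proof.
  destruct (FG_surj C) as [c ->]. destruct (FG_surj E) as [e ->].
  rewrite finv_fcls, !fmul_fcls. apply fcls_eq. rewrite app_assoc.
  apply (fequiv_app_r c (e ++ word_inv e) nil). apply winv_r.
Qed.

Lemma gen_local {Z : Type} (B : (Z -> Prop) -> Prop) (U : Z -> Prop) :
  (forall x, U x -> exists N, generated B N /\ N x /\ forall y, N y -> U y) -> generated B U.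
Proof.
  intros H x Hx. destruct (H x Hx) as [N [HN [Nx NU]]].
  destruct (HN x Nx) as [l [l1 [l2 l3]]]. exists l; repeat split; auto.
Qed.

Lemma gen_inter {Z : Type} (B : (Z -> Prop) -> Prop) (U V : Z -> Prop) :
  generated B U -> generated B V -> generated B (fun x => U x /\ V x).
Proof.
  intros HU HV x [Ux Vx]. destruct (HU x Ux) as [l [l1 [l2 l3]]].
  destruct (HV x Vx) as [m [m1 [m2 m3]]]. exists (l ++ m). split; [|split].
  - intros W HW. apply in_app_or in HW. destruct HW; [apply l1|apply m1]; auto.
  - intros W HW. apply in_app_or in HW. destruct HW; [apply l2|apply m2]; auto.
  - intros y H; split.
  + apply l3. intros W HW. apply H. apply in_or_app; auto.
  + apply m3. intros W HW. apply H. apply in_or_app; auto.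
Qed.

Lemma gen_sub {Z : Type} (B : (Z -> Prop) -> Prop) (V : Z -> Prop) : B V -> generated B V.
Proof.
  intros HV x Vx. exists (V :: nil). repeat split.
  - intros W [<-|[]]; auto.
  - intros W [<-|[]]; auto.
  - intros y Hy. apply Hy. left; auto.
Qed.

Lemma gen_full {Z : Type} (B : (Z -> Prop) -> Prop) : generated B (fun _ => True).
Proof. intros x _. exists nil. repeat split; intros; simpl in *; tauto. Qed.

Lemma gen_preimage {Z Z' : Type} (B : (Z -> Prop) -> Prop) (B' : (Z' -> Prop) -> Prop)
  (m : Z -> Z') (V : Z' -> Prop) :
  (forall W, B' W -> B (fun a => W (m a))) -> generated B' V -> generated B (fun a => V (m a)).
Proof.
  intros HB HV a Ha. destruct (HV (m a) Ha) as [l [l1 [l2 l3]]].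
  exists (map (fun W => fun a => W (m a)) l). repeat split.
  - intros W HW. apply in_map_iff in HW. destruct HW as [W' [<- HW']]. apply HB; auto.
  - intros W HW. apply in_map_iff in HW. destruct HW as [W' [<- HW']]. apply l2; auto.
  - intros y Hy. apply l3. intros W HW. apply (Hy (fun a => W (m a))). apply (in_map (fun (W0 : Z' -> Prop) (a0 : Z) => W0 (m a0))); auto.
Qed.

Lemma prod_map_cont {A A' B B' : Type} (OA : (A -> Prop) -> Prop) (OA' : (A' -> Prop) -> Prop)
  (OB : (B -> Prop) -> Prop) (OB' : (B' -> Prop) -> Prop) (f : A -> A') (g : B -> B') :
  continuous OA OA' f -> continuous OB OB' g ->
  continuous (prod_open OA OB) (prod_open OA' OB') (fun p => (f (fst p), g (snd p))).
Proof.
  intros Hf Hg W HW p Hp. destruct (HW _ Hp) as [U [V [HU [HV [Up [Vp H]]]]]].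
  exists (fun a => U (f a)), (fun b => V (g b)). repeat split; auto.
  all: try (intros q Hq1 Hq2; apply (H (f (fst q), g (snd q))); auto).
Qed.

Definition FMsub {S : Type} (OS : (S -> Prop) -> Prop) (V : FG S -> Prop) : Prop :=
  exists T, is_group_topology T /\ continuous OS T (@fgen S) /\ T V.

Lemma FM_mul_list {S : Type} (OS : (S -> Prop) -> Prop) (p : FG S * FG S) :
  forall l, (forall V, In V l -> FMsub OS V) -> (forall V, In V l -> V (fmul (fst p) (snd p))) ->
  exists A B, FM_open OS A /\ FM_open OS B /\ A (fst p) /\ B (snd p) /\
    forall q, A (fst q) -> B (snd q) -> forall V, In V l -> V (fmul (fst q) (snd q)).
Proof.
  induction l as [|V l IH]; intros H1 H2.
  - exists (fun _ => True), (fun _ => True). repeat split; try apply gen_full.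
    intros q _ _ V [].
  - destruct IH as [A [B [HA [HB [Ap [Bp HAB]]]]]].
    { intros; apply H1; right; auto. }
    { intros; apply H2; right; auto. }
    destruct (H1 V (or_introl eq_refl)) as [T [HTg [HTf TV]]].
    pose proof HTg as [_ [Tm _]].
    destruct (Tm _ TV p (H2 V (or_introl eq_refl))) as [A1 [B1 [HA1 [HB1 [A1p [B1p H1AB]]]]]].
    exists (fun x => A x /\ A1 x), (fun x => B x /\ B1 x). repeat split; auto.
    + apply gen_inter; auto. apply gen_sub. exists T; auto.
    + apply gen_inter; auto. apply gen_sub. exists T; auto.
    + intros q [Aq A1q] [Bq B1q] W [<-|HW].
      * apply H1AB; auto.
      * apply HAB; auto.
Qed.

Lemma FM_mul_cont {S : Type} (OS : (S -> Prop) -> Prop) :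
  continuous (prod_open (FM_open OS) (FM_open OS)) (FM_open OS) (fun p => fmul (fst p) (snd p)).
Proof.
  intros V HV p Hp. destruct (HV _ Hp) as [l [l1 [l2 l3]]].
  destruct (FM_mul_list OS p l l1 l2) as [A [B [HA [HB [Ap [Bp H]]]]]].
  exists A, B. repeat split; auto. intros q Aq Bq. apply l3. apply H; auto.
Qed.

Lemma FM_rtrans_cont {S : Type} (OS : (S -> Prop) -> Prop) (K : FG S) :
  continuous (FM_open OS) (FM_open OS) (fun E => fmul E K).
Proof.
  intros V HV. apply gen_local. intros E HE.
  destruct (FM_mul_cont OS V HV (E, K) HE) as [A [B [HA [HB [Ap [Bp H]]]]]].
  exists A; repeat split; auto. intros y Ay. apply (H (y, K)); auto.
Qed.

Definition pull {Z Z' : Type} (T' : (Z' -> Prop) -> Prop) (m : Z -> Z') (W : Z -> Prop) : Prop :=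
  exists V, T' V /\ forall x, W x <-> V (m x).

Lemma pull_topology {Z Z' : Type} (T' : (Z' -> Prop) -> Prop) (m : Z -> Z') :
  is_topology T' -> is_topology (pull T' m).
Proof.
  intros [H1 [H2 [H3 H4]]]. split; [|split; [|split]].
  - exists (fun _ => True); split; auto; tauto.
  - exists (fun _ => False); split; auto; tauto.
  - intros U V [U' [HU' EU]] [V' [HV' EV]]. exists (fun y => U' y /\ V' y). split; auto.
    intros x. rewrite EU, EV. tauto.
  - intros F HF.
    exists (fun y => exists V, (exists W, F W /\ T' V /\ forall x, W x <-> V (m x)) /\ V y).
    split.
    + apply H4. intros V [W [_ [HV _]]]; auto.
    + intros x; split.
      * intros [W [FW Wx]]. destruct (HF W FW) as [V [HV EV]].
        exists V; split; [exists W; auto|]. apply EV; auto.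
      * intros [V [[W [FW [_ EV]]] Vx]]. exists W; split; auto. apply EV; auto.
Qed.

Lemma pull_group {S S' : Type} (OS : (S -> Prop) -> Prop) (OS' : (S' -> Prop) -> Prop)
  (h : S -> S') (T' : (FG S' -> Prop) -> Prop) :
  continuous OS OS' h -> is_group_topology T' -> continuous OS' T' (@fgen S') ->
  is_group_topology (pull T' (Fmap h)) /\ continuous OS (pull T' (Fmap h)) (@fgen S).
Proof.
  intros Hh [Ttop [Tm Ti]] Tg. split; [split; [|split]|].
  - apply pull_topology; auto.
  - intros W [V [HV EV]] q Hq. apply EV in Hq. rewrite Fmap_mul in Hq.
    destruct (Tm _ HV (Fmap h (fst q), Fmap h (snd q)) Hq) as [A [B [HA [HB [Aq [Bq H]]]]]].
    exists (fun x => A (Fmap h x)), (fun x => B (Fmap h x)). repeat split; auto.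
    + exists A; split; auto; tauto.
    + exists B; split; auto; tauto.
    + intros r Ar Br. apply EV. rewrite Fmap_mul. apply (H (Fmap h (fst r), Fmap h (snd r))); auto.
  - intros W [V [HV EV]]. exists (fun D => V (finv D)). split; [apply Ti; auto|].
    intros x. rewrite EV, Fmap_inv. tauto.
  - intros W [V [HV EV]].
    assert (E : (fun x => W (fgen x)) = (fun x => V (fgen (h x)))).
    { apply pext; intros x. rewrite EV, Fmap_gen. tauto. }
    rewrite E. apply (Hh (fun y => V (fgen y))). apply Tg; auto.
Qed.

Lemma Fmap_cont {S S' : Type} (OS : (S -> Prop) -> Prop) (OS' : (S' -> Prop) -> Prop)
  (h : S -> S') : continuous OS OS' h -> continuous (FM_open OS) (FM_open OS') (Fmap h).
Proof.
  intros Hh V HV. apply (gen_preimage (FMsub OS) (FMsub OS')); auto.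
  intros W [T' [HT' [Tg TW]]]. destruct (pull_group OS OS' h T' Hh HT' Tg) as [G1 G2].
  exists (pull T' (Fmap h)). split; [exact G1|split; [exact G2|]].
  exists W; split; [exact TW|intros x; tauto].
Qed.

Lemma tau_map_cont {G G' : Type} (OG : (G -> Prop) -> Prop) (mul : G -> G -> G) (inv : G -> G)
  (one : G) (OG' : (G' -> Prop) -> Prop) (mul' : G' -> G' -> G') (inv' : G' -> G') (one' : G')
  (h : G -> G') :
  glaws mul inv one -> glaws mul' inv' one' ->
  (forall x y, h (mul x y) = mul' (h x) (h y)) -> (forall x, h (inv x) = inv' (h x)) ->
  h one = one' -> continuous OG OG' h ->
  continuous (tau_open OG mul inv one) (tau_open OG' mul' inv' one') h.
Proof.
  intros L L' Hm Hi Ho Hc V HV. unfold tau_open in *.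
  assert (E : (fun C => V (h (mG mul inv one C))) = (fun C => V (mG mul' inv' one' (Fmap h C)))).
  { apply pext; intros C. rewrite (mG_Fmap mul inv one mul' inv' one' h); auto. tauto. }
  rewrite E. apply (Fmap_cont OG OG' h Hc (fun D => V (mG mul' inv' one' D))); auto.
Qed.

Lemma tau_image_open {G : Type} (OG : (G -> Prop) -> Prop) (mul : G -> G -> G) (inv : G -> G)
  (one : G) (A : FG G -> Prop) :
  glaws mul inv one -> FM_open OG A ->
  tau_open OG mul inv one (fun x => exists C, A C /\ mG mul inv one C = x).
Proof.
  intros L HA. unfold tau_open. apply gen_local. intros E [C [AC EC]].
  set (K := fmul (finv E) C).
  exists (fun E' => A (fmul E' K)). repeat split.
  - apply (FM_rtrans_cont OG K A HA).
  - unfold K. rewrite fmul_cancel; auto.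
  - intros E' HE'. exists (fmul E' K); split; auto.
    rewrite (mG_fmul _ _ _ L). unfold K. rewrite (mG_inv_cancel _ _ _ L) by auto.
    apply (g_rid _ _ _ L).
Qed.

Lemma qtop_map_cont {X X' : Type} (OX : (X -> Prop) -> Prop) (x0 : X)
  (OX' : (X' -> Prop) -> Prop) (x0' : X') (f : X -> X') (Hf : continuous OX OX' f)
  (Hf0 : f x0 = x0') :
  continuous (pi1_qtop_open OX x0) (pi1_qtop_open OX' x0') (pi1_map OX x0 OX' x0' f).
Proof.
  intros V HV. unfold pi1_qtop_open in *.
  assert (E : (fun a => V (pi1_map OX x0 OX' x0' f (cls a))) =
              (fun a => V (cls (om_comp f Hf Hf0 a)))).
  { apply pext; intros a. rewrite (pi1_map_cls _ _ _ _ f Hf Hf0). tauto. }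
  rewrite E. unfold Omega_open in *.
  eapply (gen_preimage _ _ (om_comp f Hf Hf0) (fun b => V (cls b))); [|exact HV].
  intros W [K [U [HK [HU EW]]]]. exists K, (fun x => U (f x)). split; [exact HK|split; [apply Hf; exact HU|]].
  intros a. rewrite EW. simpl. tauto.
Qed.

Lemma open_local {Z : Type} (O : (Z -> Prop) -> Prop) (S : Z -> Prop) :
  is_topology O -> (forall x, S x -> exists A, O A /\ A x /\ forall y, A y -> S y) -> O S.
Proof.
  intros [_ [_ [_ HU]]] H.
  assert (E : S = (fun x => exists A, (O A /\ forall y, A y -> S y) /\ A x)).
  { apply pext; intros x; split.
    - intros Sx. destruct (H x Sx) as [A [HA [Ax HAS]]]. exists A; auto.
    - intros [A [[_ HAS] Ax]]; auto. }
  rewrite E. apply HU. intros A [HA _]; auto.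
Qed.

Lemma fst_cont {X Y : Type} (OX : (X -> Prop) -> Prop) (OY : (Y -> Prop) -> Prop) :
  is_topology OY -> continuous (prod_open OX OY) OX (@fst X Y).
Proof.
  intros [HT _] A HA p Ap. exists A, (fun _ => True). repeat split; auto.
Qed.
Lemma snd_cont {X Y : Type} (OX : (X -> Prop) -> Prop) (OY : (Y -> Prop) -> Prop) :
  is_topology OX -> continuous (prod_open OX OY) OY (@snd X Y).
Proof.
  intros [HT _] B HB p Bp. exists (fun _ => True), B. repeat split; auto.
Qed.
Lemma inj1_cont {X Y : Type} (OX : (X -> Prop) -> Prop) (OY : (Y -> Prop) -> Prop) (y0 : Y) :
  is_topology OX -> continuous OX (prod_open OX OY) (fun x => (x, y0)).
Proof.
  intros TX W HW. apply open_local; auto. intros x Hx.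
  destruct (HW _ Hx) as [A [B [HA [HB [Ax [By H]]]]]]. exists A; repeat split; auto.
  all: try (intros y Ay; apply H; auto).
Qed.
Lemma inj2_cont {X Y : Type} (OX : (X -> Prop) -> Prop) (OY : (Y -> Prop) -> Prop) (x0 : X) :
  is_topology OY -> continuous OY (prod_open OX OY) (fun y => (x0, y)).
Proof.
  intros TY W HW. apply open_local; auto. intros y Hy.
  destruct (HW _ Hy) as [A [B [HA [HB [Ax [By H]]]]]]. exists B; repeat split; auto.
  all: try (intros z Bz; apply H; auto).
Qed.

Lemma pair_loop {X Y : Type} (OX : (X -> Prop) -> Prop) (x0 : X)
  (OY : (Y -> Prop) -> Prop) (y0 : Y) (a : I -> X) (b : I -> Y) :
  is_loop OX x0 a -> is_loop OY y0 b -> is_loop (prod_open OX OY) (x0, y0) (fun t => (a t, b t)).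
Proof.
  intros [Ha [Ha0 Ha1]] [Hb [Hb0 Hb1]]. split; [|split].
  - apply cont_I_iff. apply pair_cont; apply cont_I_iff; auto.
  - rewrite Ha0, Hb0; auto.
  - rewrite Ha1, Hb1; auto.
Qed.

Definition om_pair {X Y : Type} {OX : (X -> Prop) -> Prop} {x0 : X}
  {OY : (Y -> Prop) -> Prop} {y0 : Y} (a : Omega OX x0) (b : Omega OY y0)
  : Omega (prod_open OX OY) (x0, y0) :=
  exist _ (fun t => (proj1_sig a t, proj1_sig b t)) (pair_loop OX x0 OY y0 _ _ (proj2_sig a) (proj2_sig b)).

Lemma phi_cls {X Y : Type} (OX : (X -> Prop) -> Prop) (x0 : X)
  (OY : (Y -> Prop) -> Prop) (y0 : Y) (TX : is_topology OX) (TY : is_topology OY)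
  (c : Omega (prod_open OX OY) (x0, y0)) :
  phi OX x0 OY y0 (cls c) =
  (cls (@om_comp _ _ _ (x0, y0) OX x0 (@fst X Y) (fst_cont OX OY TY) eq_refl c),
   cls (@om_comp _ _ _ (x0, y0) OY y0 (@snd X Y) (snd_cont OX OY TX) eq_refl c)).
Proof.
  unfold phi. rewrite (pi1_map_cls (prod_open OX OY) (x0, y0) OX x0 _ (fst_cont OX OY TY) eq_refl).
  rewrite (pi1_map_cls (prod_open OX OY) (x0, y0) OY y0 _ (snd_cont OX OY TX) eq_refl). reflexivity.
Qed.

Lemma phi_inj {X Y : Type} (OX : (X -> Prop) -> Prop) (x0 : X)
  (OY : (Y -> Prop) -> Prop) (y0 : Y) (TX : is_topology OX) (TY : is_topology OY)
  (c1 c2 : pi1 (prod_open OX OY) (x0, y0)) :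
  phi OX x0 OY y0 c1 = phi OX x0 OY y0 c2 -> c1 = c2.
Proof.
  destruct (pi1_surj _ _ c1) as [g1 ->]. destruct (pi1_surj _ _ c2) as [g2 ->].
  rewrite !(phi_cls OX x0 OY y0 TX TY). intros E. pose proof (f_equal fst E) as E1. pose proof (f_equal snd E) as E2.
  cbn [fst snd] in E1, E2.
  apply cls_eq_inv in E1. apply cls_eq_inv in E2. simpl in E1, E2.
  apply cls_eq.
  pose proof (homotopic_pair OX x0 OY y0 _ _ _ _ E1 E2) as H.
  assert (F : forall g : Omega (prod_open OX OY) (x0, y0),
            (fun t => (fst (proj1_sig g t), snd (proj1_sig g t))) = proj1_sig g).
  { intros g. apply functional_extensionality; intros t. destruct (proj1_sig g t); auto. }
  cbv beta in H. rewrite !F in H. exact H.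
Qed.

Lemma phi_surj {X Y : Type} (OX : (X -> Prop) -> Prop) (x0 : X)
  (OY : (Y -> Prop) -> Prop) (y0 : Y) (TX : is_topology OX) (TY : is_topology OY)
  (A : pi1 OX x0) (B : pi1 OY y0) :
  phi OX x0 OY y0 (cls (om_pair (proj1_sig (constructive_indefinite_description _ (pi1_surj _ _ A)))
                                (proj1_sig (constructive_indefinite_description _ (pi1_surj _ _ B))))) = (A, B).
Proof.
  destruct (constructive_indefinite_description _ (pi1_surj _ _ A)) as [a Ea].
  destruct (constructive_indefinite_description _ (pi1_surj _ _ B)) as [b Eb]. simpl.
  rewrite (phi_cls OX x0 OY y0 TX TY). rewrite Ea, Eb. f_equal; apply cls_ext; reflexivity.
Qed.

Definition i1map {X Y : Type} (OX : (X -> Prop) -> Prop) (x0 : X)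
  (OY : (Y -> Prop) -> Prop) (y0 : Y) :=
  pi1_map OX x0 (prod_open OX OY) (x0, y0) (fun x => (x, y0)).
Definition i2map {X Y : Type} (OX : (X -> Prop) -> Prop) (x0 : X)
  (OY : (Y -> Prop) -> Prop) (y0 : Y) :=
  pi1_map OY y0 (prod_open OX OY) (x0, y0) (fun y => (x0, y)).

Lemma phi_key {X Y : Type} (OX : (X -> Prop) -> Prop) (x0 : X)
  (OY : (Y -> Prop) -> Prop) (y0 : Y) (TX : is_topology OX) (TY : is_topology OY)
  (x : pi1 OX x0) (y : pi1 OY y0) :
  phi OX x0 OY y0 (pi1_mul _ _ (i1map OX x0 OY y0 x) (i2map OX x0 OY y0 y)) = (x, y).
Proof.
  unfold phi. rewrite !(pi1_map_mul (prod_open OX OY) (x0, y0) OX x0 _ (fst_cont OX OY TY) eq_refl).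
  rewrite !(pi1_map_mul (prod_open OX OY) (x0, y0) OY y0 _ (snd_cont OX OY TX) eq_refl).
  destruct (pi1_surj _ _ x) as [a ->]. destruct (pi1_surj _ _ y) as [b ->].
  unfold i1map, i2map.
  rewrite (pi1_map_cls OX x0 (prod_open OX OY) (x0, y0) _ (inj1_cont OX OY y0 TX) eq_refl).
  rewrite (pi1_map_cls OY y0 (prod_open OX OY) (x0, y0) _ (inj2_cont OX OY x0 TY) eq_refl).
  rewrite !(pi1_map_cls (prod_open OX OY) (x0, y0) OX x0 _ (fst_cont OX OY TY) eq_refl).
  rewrite !(pi1_map_cls (prod_open OX OY) (x0, y0) OY y0 _ (snd_cont OX OY TX) eq_refl).
  rewrite <- (g_rid _ _ _ (pi1_laws OX x0) (cls a)).
  rewrite <- (g_lid _ _ _ (pi1_laws OY y0) (cls b)).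
  unfold pi1_one. rewrite !pi1_mul_cls.
  f_equal; apply cls_ext; intros t; reflexivity.
Qed.

Theorem proposition3p18 :
  forall (X : Type) (OX : (X -> Prop) -> Prop) (x0 : X)
         (Y : Type) (OY : (Y -> Prop) -> Prop) (y0 : Y),
  is_topology OX -> is_topology OY ->
  (* group homomorphism *)
  (forall a b : pi1 (prod_open OX OY) (x0, y0),
     phi OX x0 OY y0 (pi1_mul (prod_open OX OY) (x0, y0) a b) =
     (pi1_mul OX x0 (fst (phi OX x0 OY y0 a)) (fst (phi OX x0 OY y0 b)),
      pi1_mul OY y0 (snd (phi OX x0 OY y0 a)) (snd (phi OX x0 OY y0 b)))) /\
  (* bijective *)
  (forall p : pi1 OX x0 * pi1 OY y0, exists! c, phi OX x0 OY y0 c = p) /\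
  (* continuous *)
  continuous (pi1_tau_open (prod_open OX OY) (x0, y0))
             (prod_open (pi1_tau_open OX x0) (pi1_tau_open OY y0))
             (phi OX x0 OY y0) /\
  (* open, hence a homeomorphism *)
  (forall U, pi1_tau_open (prod_open OX OY) (x0, y0) U ->
     prod_open (pi1_tau_open OX x0) (pi1_tau_open OY y0)
               (fun p => exists c, U c /\ phi OX x0 OY y0 c = p)) /\
  (* naturality in based maps *)
  (forall (X' : Type) (OX' : (X' -> Prop) -> Prop) (x0' : X')
          (Y' : Type) (OY' : (Y' -> Prop) -> Prop) (y0' : Y')
          (f : X -> X') (g : Y -> Y'),
     is_topology OX' -> is_topology OY' ->
     continuous OX OX' f -> f x0 = x0' ->
     continuous OY OY' g -> g y0 = y0' ->
     forall c : pi1 (prod_open OX OY) (x0, y0),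
       phi OX' x0' OY' y0'
         (pi1_map (prod_open OX OY) (x0, y0) (prod_open OX' OY') (x0', y0')
                  (fun p => (f (fst p), g (snd p))) c) =
       (pi1_map OX x0 OX' x0' f (fst (phi OX x0 OY y0 c)),
        pi1_map OY y0 OY' y0' g (snd (phi OX x0 OY y0 c)))).
Proof.
  intros X OX x0 Y OY y0 TX TY.
  pose proof (fst_cont OX OY TY) as Hfst. pose proof (snd_cont OX OY TX) as Hsnd.
  pose proof (pi1_laws OX x0) as LX. pose proof (pi1_laws OY y0) as LY.
  pose proof (pi1_laws (prod_open OX OY) (x0, y0)) as LZ.
  split; [|split; [|split; [|split]]].
  -
    intros a b. unfold phi; simpl.
    rewrite (pi1_map_mul (prod_open OX OY) (x0, y0) OX x0 _ Hfst eq_refl).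
    rewrite (pi1_map_mul (prod_open OX OY) (x0, y0) OY y0 _ Hsnd eq_refl). reflexivity.
  -
    intros [A B]. eexists. split.
    + apply (phi_surj OX x0 OY y0 TX TY A B).
    + intros c' Hc'. apply (phi_inj OX x0 OY y0 TX TY). rewrite Hc'.
      apply (phi_surj OX x0 OY y0 TX TY A B).
  -
    intros W HW. unfold pi1_tau_open, tau_open. apply gen_local.
    intros E HE. destruct (HW _ HE) as [A [B [HA [HB [Ap [Bp H]]]]]].
    pose proof (tau_map_cont _ _ _ _ _ _ _ _ _ LZ LX
      (pi1_map_mul (prod_open OX OY) (x0, y0) OX x0 _ Hfst eq_refl)
      (pi1_map_inv (prod_open OX OY) (x0, y0) OX x0 _ Hfst eq_refl)
      (pi1_map_one (prod_open OX OY) (x0, y0) OX x0 _ Hfst eq_refl)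
      (qtop_map_cont (prod_open OX OY) (x0, y0) OX x0 _ Hfst eq_refl) A HA) as C1.
    pose proof (tau_map_cont _ _ _ _ _ _ _ _ _ LZ LY
      (pi1_map_mul (prod_open OX OY) (x0, y0) OY y0 _ Hsnd eq_refl)
      (pi1_map_inv (prod_open OX OY) (x0, y0) OY y0 _ Hsnd eq_refl)
      (pi1_map_one (prod_open OX OY) (x0, y0) OY y0 _ Hsnd eq_refl)
      (qtop_map_cont (prod_open OX OY) (x0, y0) OY y0 _ Hsnd eq_refl) B HB) as C2.
    eexists. split; [apply (gen_inter _ _ _ C1 C2)|]. split.
    + split; [exact Ap|exact Bp].
    + intros y [Ay By]. apply H; auto.
  -
    intros U HU p [c [Uc Ep]].
    pose proof (inj1_cont OX OY y0 TX) as Hi1. pose proof (inj2_cont OX OY x0 TY) as Hi2.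
    set (mZ := mG (pi1_mul (prod_open OX OY) (x0, y0)) (pi1_inv (prod_open OX OY) (x0, y0))
                  (pi1_one (prod_open OX OY) (x0, y0))).
    set (mX := mG (pi1_mul OX x0) (pi1_inv OX x0) (pi1_one OX x0)).
    set (mY := mG (pi1_mul OY y0) (pi1_inv OY y0) (pi1_one OY y0)).
    set (i1 := i1map OX x0 OY y0). set (i2 := i2map OX x0 OY y0).
    assert (Hm : forall C D, mZ (fmul (Fmap i1 C) (Fmap i2 D)) =
                 pi1_mul _ _ (i1 (mX C)) (i2 (mY D))).
    { intros C D. unfold mZ. rewrite (mG_fmul _ _ _ LZ).
      unfold i1, i2, i1map, i2map, mX, mY.
      rewrite (mG_Fmap _ _ _ _ _ _ _ LX LZ
        (pi1_map_mul OX x0 (prod_open OX OY) (x0, y0) _ Hi1 eq_refl)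
        (pi1_map_inv OX x0 (prod_open OX OY) (x0, y0) _ Hi1 eq_refl)
        (pi1_map_one OX x0 (prod_open OX OY) (x0, y0) _ Hi1 eq_refl)).
      rewrite (mG_Fmap _ _ _ _ _ _ _ LY LZ
        (pi1_map_mul OY y0 (prod_open OX OY) (x0, y0) _ Hi2 eq_refl)
        (pi1_map_inv OY y0 (prod_open OX OY) (x0, y0) _ Hi2 eq_refl)
        (pi1_map_one OY y0 (prod_open OX OY) (x0, y0) _ Hi2 eq_refl)).
      reflexivity. }
    assert (Hcont : continuous
      (prod_open (FM_open (pi1_qtop_open OX x0)) (FM_open (pi1_qtop_open OY y0)))
      (FM_open (pi1_qtop_open (prod_open OX OY) (x0, y0)))
      (fun q => fmul (Fmap i1 (fst q)) (Fmap i2 (snd q)))).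
    { apply (cont_compose _ (prod_open (FM_open (pi1_qtop_open (prod_open OX OY) (x0, y0)))
                                       (FM_open (pi1_qtop_open (prod_open OX OY) (x0, y0))))
              _ (fun q => (Fmap i1 (fst q), Fmap i2 (snd q))) (fun r => fmul (fst r) (snd r))).
      - apply prod_map_cont; apply Fmap_cont; apply qtop_map_cont; auto.
      - apply FM_mul_cont. }
    destruct (Hcont _ HU (fgen (fst p), fgen (snd p))) as [A [B [HA [HB [Ap [Bp HAB]]]]]].
    { simpl. fold mZ. rewrite Hm. unfold mX, mY. rewrite !mG_fgen by auto.
      replace (pi1_mul _ _ (i1 (fst p)) (i2 (snd p))) with c; auto.
      apply (phi_inj OX x0 OY y0 TX TY). rewrite Ep. unfold i1, i2.
      rewrite phi_key by auto. destruct p; auto. }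
    exists (fun x => exists C, A C /\ mX C = x), (fun y => exists D, B D /\ mY D = y).
    split; [apply tau_image_open; auto|].
    split; [apply tau_image_open; auto|].
    split; [exists (fgen (fst p)); split; auto; apply mG_fgen; auto|].
    split; [exists (fgen (snd p)); split; auto; apply mG_fgen; auto|].
    intros q [C [AC EC]] [D [BD ED]].
    exists (pi1_mul _ _ (i1 (fst q)) (i2 (snd q))). split.
    + pose proof (HAB (C, D) AC BD) as HU'. simpl in HU'. fold mZ in HU'.
      rewrite Hm in HU'. rewrite EC, ED in HU'. exact HU'.
    + unfold i1, i2. rewrite phi_key by auto. destruct q; auto.
  -
    intros X' OX' x0' Y' OY' y0' f g TX' TY' Hf Hf0 Hg Hg0 c.
    destruct (pi1_surj _ _ c) as [a ->].
    pose proof (prod_map_cont OX OX' OY OY' f g Hf Hg) as Hfg.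
    assert (Hfg0 : (fun p : X * Y => (f (fst p), g (snd p))) (x0, y0) = (x0', y0'))
      by (simpl; rewrite Hf0, Hg0; auto).
    rewrite (pi1_map_cls _ _ _ _ _ Hfg Hfg0).
    rewrite !(phi_cls _ _ _ _ TX' TY'). rewrite (phi_cls _ _ _ _ TX TY). simpl.
    rewrite (pi1_map_cls _ _ _ _ _ Hf Hf0). rewrite (pi1_map_cls _ _ _ _ _ Hg Hg0).
    f_equal; apply cls_ext; intros t; reflexivity.
Qed.
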